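(* Let $\gamma$ be a planar strictly convex $C^2$ smooth closed curve and consider the Birkhoff billiard map $T$ in $\gamma$ on the phase cylinder $\mathbb{A}$ of oriented lines intersecting $\gamma$. Let $\mathcal{M}_L$ be the set swept by m-orbits for the generating function $L(s,s_1)=|\gamma(s_1)-\gamma(s)|$ in the coordinates $(s,\cos\delta)$, and $\mathcal{M}_S$ the set swept by m-orbits for the generating function $S(\varphi,\varphi_1)=2h(\psi)\sin\delta$, $\psi=\frac{\varphi+\varphi_1}{2}$, $\delta=\frac{\varphi_1-\varphi}{2}$, in the coordinates $(\varphi,p)$. Then $\mathcal{M}_L=\mathcal{M}_S$.
   Context: An oriented line meeting $\gamma$ at the point $\gamma(s)$ ($s$ arc length) with angle $\delta\in(0,\pi)$ to the tangent has coordinates $(s,\cos\delta)$; alternatively it has coordinates $(\varphi,p)$, where $\varphi$ is the angle between the right unit normal of the line and the horizontal direction and $p$ is the signed distance from the origin (an interior point) to the line. Both are symplectic coordinates on $\mathbb{A}$. $h$ is the support function of $\gamma$, $h(\psi)=\max_{X\in\gamma}\langle X,(\cos\psi,\sin\psi)\rangle$. Generating function convention: $T(s,\cos\delta)=(s_1,\cos\delta_1)$ iff $\cos\delta=-L_1(s,s_1)$, $\cos\delta_1=L_2(s,s_1)$; $T(\varphi,p)=(\varphi_1,p_1)$ iff $p=-S_1(\varphi,\varphi_1)$, $p_1=S_2(\varphi,\varphi_1)$; both satisfy $L_{12}>0$, $S_{12}>0$ (subscripts denote partial derivatives). For a generating function $H$ (either $L$ or $S$), a configuration $\{q_n\}_{n\in\mathbb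 Z}$ (first coordinates of an orbit) is an m-configuration if for any integers $M<N$ the segment $(q_{M+1},\dots,q_{N-1})$ is a local maximum of $\sum_{n=M}^{N-1}H(x_n,x_{n+1})$ with fixed end points $x_M=q_M$, $x_N=q_N$; the corresponding orbits are m-orbits. *)

(* Defs.v *)
From Stdlib Require Import Reals ZArith.
From Coquelicot Require Import Coquelicot.
Open Scope R_scope.

Definition C2fun (f : R -> R) : Prop :=
  (forall t, ex_derive f t) /\
  (forall t, ex_derive (Derive f) t) /\
  (forall t, continuous (Derive (Derive f)) t).

(** gamma(t) = (g1 t, g2 t), arc-length parametrised, P-periodic (P = length),
    C^2, counterclockwise, strictly convex: every tangent line meets the
    curve only at its tangency point and the curve lies strictly to the left
    (i.e. on the side of the inward normal nu = J gamma'). *)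
Definition tang1 (g1 g2 : R -> R) (t : R) : R := Derive g1 t.
Definition tang2 (g1 g2 : R -> R) (t : R) : R := Derive g2 t.
Definition nrm1 (g1 g2 : R -> R) (t : R) : R := - Derive g2 t.
Definition nrm2 (g1 g2 : R -> R) (t : R) : R := Derive g1 t.

Definition strictly_convex_C2_closed_curve (g1 g2 : R -> R) (P : R) : Prop :=
  0 < P /\ C2fun g1 /\ C2fun g2 /\
  (forall t, g1 (t + P) = g1 t /\ g2 (t + P) = g2 t) /\
  (forall t, (Derive g1 t) ^ 2 + (Derive g2 t) ^ 2 = 1) /\
  (forall t t', (forall k : Z, t' <> t + IZR k * P) ->
     (g1 t' - g1 t) * nrm1 g1 g2 t + (g2 t' - g2 t) * nrm2 g1 g2 t > 0).

Definition origin_interior (g1 g2 : R -> R) : Prop :=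
  forall t, g1 t * nrm1 g1 g2 t + g2 t * nrm2 g1 g2 t < 0.

Definition support_fun (g1 g2 : R -> R) (psi : R) : R :=
  real (Lub_Rbar (fun r => exists t, r = g1 t * cos psi + g2 t * sin psi)).

(** * Oriented lines
    An oriented line is represented by (its right unit normal, signed distance
    from the origin): the line { X | <X,n> = p } oriented by the direction d
    whose right unit normal is n, i.e. d = (-n2, n1). *)
Definition oline := ((R * R) * R)%type.

Definition line_of_phip (phi p : R) : oline := ((cos phi, sin phi), p).

(** line with coordinates (s, cos delta): through gamma(s), direction
    e = cos delta * tau(s) + sin delta * nu(s), delta in (0,pi). *)
Definition line_of_scos (g1 g2 : R -> R) (s y : R) : oline :=
  let sn := sqrt (1 - y ^ 2) in
  let e1 := y * tang1 g1 g2 s + sn * nrm1 g1 g2 s in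
  let e2 := y * tang2 g1 g2 s + sn * nrm2 g1 g2 s in
  let n1 := e2 in
  let n2 := - e1 in
  ((n1, n2), g1 s * n1 + g2 s * n2).

(** Phase cylinder A in each coordinate system (lifted first coordinate). *)
Definition inA_L (s y : R) : Prop := -1 < y < 1.
Definition inA_S (g1 g2 : R -> R) (phi p : R) : Prop :=
  - support_fun g1 g2 (phi + PI) < p < support_fun g1 g2 phi.

Definition Lgen (g1 g2 : R -> R) (s s1 : R) : R :=
  sqrt ((g1 s1 - g1 s) ^ 2 + (g2 s1 - g2 s) ^ 2).

Definition Sgen (g1 g2 : R -> R) (phi phi1 : R) : R :=
  2 * support_fun g1 g2 ((phi + phi1) / 2) * sin ((phi1 - phi) / 2).

(** * Orbits of T in coordinates given by a generating function H (on the
    universal cover, period Per of the first coordinate):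
    T(x_n, y_n) = (x_{n+1}, y_{n+1}) iff y_n = -H_1(x_n,x_{n+1}),
    y_{n+1} = H_2(x_n,x_{n+1}), with x_n < x_{n+1} < x_n + Per. *)
Definition gen_orbit (H : R -> R -> R) (Per : R) (inA : R -> R -> Prop)
    (q y : Z -> R) : Prop :=
  forall n : Z,
    inA (q n) (y n) /\
    q n < q (n + 1)%Z < q n + Per /\
    is_derive (fun t => H t (q (n + 1)%Z)) (q n) (- y n) /\
    is_derive (fun t => H (q n) t) (q (n + 1)%Z) (y (n + 1)%Z).

Fixpoint seg_sum (H : R -> R -> R) (x : Z -> R) (M : Z) (k : nat) : R :=
  match k with
  | O => 0
  | S k' => H (x M) (x (M + 1)%Z) + seg_sum H x (M + 1)%Z k'
  end.

Definition m_config (H : R -> R -> R) (q : Z -> R) : Prop :=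
  forall M N : Z, (M < N)%Z ->
    exists eps : R, 0 < eps /\
      forall x : Z -> R, x M = q M -> x N = q N ->
        (forall i : Z, (M < i < N)%Z -> Rabs (x i - q i) < eps) ->
        seg_sum H x M (Z.to_nat (N - M)) <= seg_sum H q M (Z.to_nat (N - M)).

Definition M_L (g1 g2 : R -> R) (P : R) (l : oline) : Prop :=
  exists q y : Z -> R,
    gen_orbit (Lgen g1 g2) P inA_L q y /\ m_config (Lgen g1 g2) q /\
    exists n : Z, l = line_of_scos g1 g2 (q n) (y n).

Definition M_S (g1 g2 : R -> R) (l : oline) : Prop :=
  exists q p : Z -> R,
    gen_orbit (Sgen g1 g2) (2 * PI) (inA_S g1 g2) q p /\ m_config (Sgen g1 g2) q /\
    exists n : Z, l = line_of_phip (q n) (p n).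

(* Main.v *)
Require Import Defs.
From Stdlib Require Import Reals ZArith Lra Lia Psatz IndefiniteDescription.
From Coquelicot Require Import Coquelicot.
Open Scope R_scope.


Lemma seg_sum_S H x M k : seg_sum H x M (S k) = H (x M) (x (M + 1)%Z) + seg_sum H x (M + 1)%Z k.
Proof. reflexivity. Qed.

Lemma seg_sum_le H H' x z F M k :
  (forall j, (j < k)%nat ->
     H (x (M + Z.of_nat j)%Z) (x (M + Z.of_nat j + 1)%Z) <=
     H' (z (M + Z.of_nat j)%Z) (z (M + Z.of_nat j + 1)%Z) + F (M + Z.of_nat j)%Z - F (M + Z.of_nat j + 1)%Z) ->
  seg_sum H x M k <= seg_sum H' z M k + F M - F (M + Z.of_nat k)%Z.
Proof.
  revert M. induction k as [|k IH]; intros M Hj.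
  - simpl. replace (M + 0)%Z with M by lia. lra.
  - rewrite !seg_sum_S.
    pose proof (Hj 0%nat ltac:(lia)) as H0. replace (M + Z.of_nat 0)%Z with M in H0 by lia.
    assert (IH' := IH (M + 1)%Z).
    replace (M + 1 + Z.of_nat k)%Z with (M + Z.of_nat (S k))%Z in IH' by lia.
    assert (seg_sum H x (M + 1) k <= seg_sum H' z (M + 1) k + F (M + 1)%Z - F (M + Z.of_nat (S k))%Z).
    { apply IH'. intros j Hjk. specialize (Hj (S j) ltac:(lia)).
      replace (M + 1 + Z.of_nat j)%Z with (M + Z.of_nat (S j))%Z by lia. exact Hj. }
    lra.
Qed.

Lemma seg_sum_eq H H' x z F M k :
  (forall j, (j < k)%nat ->
     H (x (M + Z.of_nat j)%Z) (x (M + Z.of_nat j + 1)%Z) =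
     H' (z (M + Z.of_nat j)%Z) (z (M + Z.of_nat j + 1)%Z) + F (M + Z.of_nat j)%Z - F (M + Z.of_nat j + 1)%Z) ->
  seg_sum H x M k = seg_sum H' z M k + F M - F (M + Z.of_nat k)%Z.
Proof.
  revert M. induction k as [|k IH]; intros M Hj.
  - simpl. replace (M + 0)%Z with M by lia. lra.
  - rewrite !seg_sum_S.
    pose proof (Hj 0%nat ltac:(lia)) as H0. replace (M + Z.of_nat 0)%Z with M in H0 by lia.
    assert (IH' := IH (M + 1)%Z).
    replace (M + 1 + Z.of_nat k)%Z with (M + Z.of_nat (S k))%Z in IH' by lia.
    assert (seg_sum H x (M + 1) k = seg_sum H' z (M + 1) k + F (M + 1)%Z - F (M + Z.of_nat (S k))%Z).
    { apply IH'. intros j Hjk. specialize (Hj (S j) ltac:(lia)).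
      replace (M + 1 + Z.of_nat j)%Z with (M + Z.of_nat (S j))%Z by lia. exact Hj. }
    lra.
Qed.

Lemma seg_sum_snoc H x M k :
  seg_sum H x M (S k) = seg_sum H x M k + H (x (M + Z.of_nat k)%Z) (x (M + Z.of_nat k + 1)%Z).
Proof.
  revert M. induction k as [|k IH]; intros M.
  - simpl. replace (M + 0)%Z with M by lia. lra.
  - rewrite seg_sum_S, IH, seg_sum_S.
    replace (M + 1 + Z.of_nat k)%Z with (M + Z.of_nat (S k))%Z by lia. lra.
Qed.

Lemma seg_sum_ext H x y M k :
  (forall j, (j <= k)%nat -> x (M + Z.of_nat j)%Z = y (M + Z.of_nat j)%Z) ->
  seg_sum H x M k = seg_sum H y M k.
Proof.
  revert M. induction k as [|k IH]; intros M Hj.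
  - reflexivity.
  - rewrite !seg_sum_S. f_equal.
    + pose proof (Hj 0%nat ltac:(lia)) as A. pose proof (Hj 1%nat ltac:(lia)) as B.
      replace (M + Z.of_nat 0)%Z with M in A by lia. replace (M + Z.of_nat 1)%Z with (M + 1)%Z in B by lia.
      rewrite A, B. reflexivity.
    + apply IH. intros j Hjk. specialize (Hj (S j) ltac:(lia)).
      replace (M + 1 + Z.of_nat j)%Z with (M + Z.of_nat (S j))%Z by lia. exact Hj.
Qed.

Lemma unif_aux (Q : Z -> R -> Prop) M :
  (forall k d d', 0 < d' <= d -> Q k d -> Q k d') ->
  forall n : nat, (forall k, (M <= k < M + Z.of_nat n)%Z -> exists d, 0 < d /\ Q k d) ->
  exists d, 0 < d /\ forall k, (M <= k < M + Z.of_nat n)%Z -> Q k d.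
Proof.
  intros Hmono n. induction n as [|n IH]; intros Hk.
  - exists 1. split. lra. intros k Hr. lia.
  - destruct IH as [d0 [Hd0 H0]].
    { intros k Hr. apply Hk. lia. }
    destruct (Hk (M + Z.of_nat n)%Z) as [d1 [Hd1 H1]]. lia.
    exists (Rmin d0 d1). split. apply Rmin_pos; auto.
    intros k Hr. destruct (Z.eq_dec k (M + Z.of_nat n)) as [->|Hne].
    + apply (Hmono _ d1). split. apply Rmin_pos; auto. apply Rmin_r. auto.
    + apply (Hmono _ d0). split. apply Rmin_pos; auto. apply Rmin_l. apply H0. lia.
Qed.

Lemma unif (Q : Z -> R -> Prop) M N :
  (forall k d d', 0 < d' <= d -> Q k d -> Q k d') ->
  (forall k, (M <= k <= N)%Z -> exists d, 0 < d /\ Q k d) ->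
  exists d, 0 < d /\ forall k, (M <= k <= N)%Z -> Q k d.
Proof.
  intros Hm Hk. destruct (Z_lt_le_dec N M) as [Hl|Hl].
  - exists 1. split. lra. intros; lia.
  - destruct (unif_aux Q M Hm (Z.to_nat (N - M + 1))) as [d [Hd H]].
    { intros k Hr. apply Hk. lia. }
    exists d. split; auto. intros k Hr. apply H. lia.
Qed.

Lemma choice_Z (Q : Z -> R -> Prop) : (forall k, exists x, Q k x) -> exists f : Z -> R, forall k, Q k (f k).
Proof.
  intros H. exists (fun k => proj1_sig (constructive_indefinite_description _ (H k))).
  intros k. apply (proj2_sig (constructive_indefinite_description _ (H k))).
Qed.

Lemma Zind2 (Pr : Z -> Prop) n0 : Pr n0 -> (forall n, Pr n -> Pr (n + 1)%Z) ->
  (forall n, Pr (n + 1)%Z -> Pr n) -> forall n, Pr n.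
Proof.
  intros H0 Hs Hp n. replace n with (n0 + (n - n0))%Z by lia.
  generalize (n - n0)%Z as k. intro k. induction k using Z.peano_ind.
  - replace (n0 + 0)%Z with n0 by lia. auto.
  - replace (n0 + Z.succ k)%Z with (n0 + k + 1)%Z by lia. auto.
  - apply Hp. replace (n0 + Z.pred k + 1)%Z with (n0 + k)%Z by lia. auto.
Qed.

Fixpoint fsum (A : Z -> R) (n0 : Z) (k : nat) : R :=
  match k with O => 0 | S k' => fsum A n0 k' + A (n0 + Z.of_nat (S k'))%Z end.
Fixpoint bsum (A : Z -> R) (n0 : Z) (k : nat) : R :=
  match k with O => 0 | S k' => bsum A n0 k' + A (n0 - Z.of_nat k')%Z end.

Lemma add_rec (A : Z -> R) n0 x0 : exists f : Z -> R, f n0 = x0 /\ forall n, f (n + 1)%Z = f n + A (n + 1)%Z.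
Proof.
  exists (fun n => if Z_le_dec n0 n then x0 + fsum A n0 (Z.to_nat (n - n0)) else x0 - bsum A n0 (Z.to_nat (n0 - n))).
  split.
  - destruct (Z_le_dec n0 n0); [|lia]. replace (n0 - n0)%Z with 0%Z by lia. simpl. ring.
  - intros n. destruct (Z_le_dec n0 (n + 1)) as [H1|H1]; destruct (Z_le_dec n0 n) as [H2|H2].
    + replace (Z.to_nat (n + 1 - n0)) with (S (Z.to_nat (n - n0))) by lia. simpl.
      replace (n0 + Z.pos (Pos.of_succ_nat (Z.to_nat (n - n0))))%Z with (n + 1)%Z by lia. ring.
    + assert (n = n0 - 1)%Z by lia. subst n.
      replace (n0 - 1 + 1 - n0)%Z with 0%Z by lia. replace (n0 - (n0 - 1))%Z with 1%Z by lia.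
      simpl. replace (n0 - 0)%Z with n0 by lia. replace (n0 - 1 + 1)%Z with n0 by lia. ring.
    + lia.
    + replace (Z.to_nat (n0 - n)) with (S (Z.to_nat (n0 - (n + 1)))) by lia. simpl.
      replace (n0 - Z.of_nat (Z.to_nat (n0 - (n + 1))))%Z with (n + 1)%Z by lia. ring.
Qed.


Definition pr (g1 g2 : R -> R) t psi := g1 t * cos psi + g2 t * sin psi.
Definition prd (g1 g2 : R -> R) t th := - g1 t * sin th + g2 t * cos th.
Definition ismax (g1 g2 : R -> R) t psi := forall t', pr g1 g2 t' psi <= pr g1 g2 t psi.

Lemma reduce_mod (P a x : R) : 0 < P -> exists k : Z, a <= x + IZR k * P < a + P.
Proof.
  intros HP. destruct (archimed ((x - a) / P)) as [H1 H2].
  exists (1 - up ((x - a) / P))%Z. rewrite minus_IZR.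
  set (n := IZR (up ((x - a) / P))) in *.
  assert (E: x - a = ((x - a) / P) * P) by (field; lra).
  split; nra.
Qed.

Lemma not_congr_open (P t x : R) : 0 < P -> t < x < t + P -> forall k : Z, x <> t + IZR k * P.
Proof.
  intros HP Hx k E.
  destruct (Z_lt_le_dec k 1) as [Hk|Hk].
  - assert (IZR k <= 0) by (apply IZR_le; lia). nra.
  - assert (1 <= IZR k) by (apply IZR_le; lia). nra.
Qed.

Definition chord (g1 g2 : R -> R) a b th :=
  g1 b - g1 a = Lgen g1 g2 a b * (- sin th) /\ g2 b - g2 a = Lgen g1 g2 a b * cos th.

Definition Pair (g1 g2 : R -> R) P (q phi : Z -> R) := forall n,
  (q n < q (n + 1)%Z < q n + P) /\ (phi n < phi (n + 1)%Z < phi n + 2 * PI) /\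
  ismax g1 g2 (q (n + 1)%Z) ((phi n + phi (n + 1)%Z) / 2) /\ chord g1 g2 (q n) (q (n + 1)%Z) (phi n).

Definition yP (g1 g2 : R -> R) (q phi : Z -> R) n :=
  - sin (phi n) * Derive g1 (q n) + cos (phi n) * Derive g2 (q n).
Definition pP (g1 g2 : R -> R) (q phi : Z -> R) n := pr g1 g2 (q n) (phi n).

Lemma frame (e1 e2 c1 c2 : R) : e1 ^ 2 + e2 ^ 2 = 1 -> c1 ^ 2 + c2 ^ 2 = 1 ->
  c1 = (c1 * e1 + c2 * e2) * e1 - (- c1 * e2 + c2 * e1) * e2 /\
  c2 = (c1 * e1 + c2 * e2) * e2 + (- c1 * e2 + c2 * e1) * e1 /\
  (c1 * e1 + c2 * e2) ^ 2 + (- c1 * e2 + c2 * e1) ^ 2 = 1.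
Proof.
  intros He Hc. split; [|split].
  - transitivity (c1 * (e1 ^ 2 + e2 ^ 2)). rewrite He; ring. ring.
  - transitivity (c2 * (e1 ^ 2 + e2 ^ 2)). rewrite He; ring. ring.
  - transitivity ((c1 ^ 2 + c2 ^ 2) * (e1 ^ 2 + e2 ^ 2)). ring. rewrite He, Hc; ring.
Qed.

Lemma sqrt_w_pos y w : y ^ 2 + w ^ 2 = 1 -> 0 < w -> w = sqrt (1 - y²).
Proof. intros H Hw. symmetry. apply sqrt_lem_1; unfold Rsqr; nra. Qed.
Lemma sqrt_w_neg y w : y ^ 2 + w ^ 2 = 1 -> w < 0 -> w = - sqrt (1 - y²).
Proof. intros H Hw. assert (- w = sqrt (1 - y²)) by (symmetry; apply sqrt_lem_1; unfold Rsqr; nra). lra. Qed.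

Lemma angle_exists x y : x ^ 2 + y ^ 2 = 1 -> exists th, cos th = x /\ sin th = y.
Proof.
  intros H. assert (Hx : -1 <= x <= 1) by nra.
  destruct (Rle_dec 0 y) as [Hy|Hy].
  - exists (acos x). split. apply cos_acos; auto. rewrite sin_acos by auto.
    apply sqrt_lem_1; unfold Rsqr; nra.
  - exists (- acos x). split. rewrite cos_neg. apply cos_acos; auto. rewrite sin_neg, sin_acos by auto.
    assert (sqrt (1 - x²) = - y) by (apply sqrt_lem_1; unfold Rsqr; nra). lra.
Qed.

Lemma cos_lt_1_open x : 0 < x < 2 * PI -> cos x < 1.
Proof.
  intros Hx. replace x with (2 * (x / 2)) by field. rewrite cos_2a_sin.
  assert (0 < sin (x / 2)) by (apply sin_gt_0; lra). nra.
Qed.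

Lemma rot_neq a x : 0 < x < 2 * PI -> cos (a + x) = cos a -> sin (a + x) = sin a -> False.
Proof.
  intros Hx Hc Hs. pose proof (cos_lt_1_open x Hx).
  assert (cos x = cos (a + x) * cos a + sin (a + x) * sin a).
  { replace x with ((a + x) - a) at 1 by ring. apply cos_minus. }
  rewrite Hc, Hs in H0. pose proof (sin2_cos2 a). unfold Rsqr in H1. lra.
Qed.

Section Curve.
Variables (g1 g2 : R -> R) (P : R).
Hypothesis HC : strictly_convex_C2_closed_curve g1 g2 P.

Lemma HP : 0 < P. Proof. apply HC. Qed.
Lemma ex_d1 t : ex_derive g1 t. Proof. apply HC. Qed.
Lemma ex_d2 t : ex_derive g2 t. Proof. apply HC. Qed.
Lemma unit_d t : Derive g1 t ^ 2 + Derive g2 t ^ 2 = 1. Proof. apply HC. Qed.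
Lemma SC t t' : (forall k : Z, t' <> t + IZR k * P) ->
  (g1 t' - g1 t) * (- Derive g2 t) + (g2 t' - g2 t) * Derive g1 t > 0.
Proof. intros Hk. destruct HC as (_&_&_&_&_&H). apply (H t t' Hk). Qed.

Lemma per1 t : g1 (t + P) = g1 t /\ g2 (t + P) = g2 t.
Proof. apply HC. Qed.

Lemma perZ (k : Z) t : g1 (t + IZR k * P) = g1 t /\ g2 (t + IZR k * P) = g2 t.
Proof.
  revert t. induction k using Z.peano_ind; intro t.
  - rewrite Rmult_0_l, Rplus_0_r; auto.
  - rewrite <- Z.add_1_r, plus_IZR. replace (t + (IZR k + 1) * P) with ((t + IZR k * P) + P) by ring.
    destruct (per1 (t + IZR k * P)) as [A B]. rewrite A, B. apply IHk.
  - rewrite <- Z.sub_1_r, minus_IZR. destruct (IHk (t - P)) as [A B].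
    destruct (per1 (t - P)) as [C D]. replace (t - P + P) with t in C, D by ring.
    replace (t + (IZR k - 1) * P) with (t - P + IZR k * P) by ring.
    rewrite A, B, <- C, <- D. auto.
Qed.

Lemma is_derive_shift (f : R -> R) c t : ex_derive f (t + c) ->
  Derive (fun x => f (x + c)) t = Derive f (t + c).
Proof.
  intros He. apply is_derive_unique.
  assert (D : is_derive (fun x : R => x + c) t 1) by (auto_derive; auto; ring).
  pose proof (is_derive_comp f (fun x => x + c) t _ 1 (Derive_correct _ _ He) D) as H.
  unfold scal in H; simpl in H; unfold mult in H; simpl in H. rewrite Rmult_1_l in H. exact H.
Qed.

Lemma perZD (k : Z) t : Derive g1 (t + IZR k * P) = Derive g1 t /\ Derive g2 (t + IZR k * P) = Derive g2 t.
Proof.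
  split.
  - rewrite <- is_derive_shift by apply ex_d1. apply Derive_ext. intro x. apply perZ.
  - rewrite <- is_derive_shift by apply ex_d2. apply Derive_ext. intro x. apply perZ.
Qed.

Lemma cont_eps (f : R -> R) t : continuity_pt f t ->
  forall eps, 0 < eps -> exists del, 0 < del /\ forall x, Rabs (x - t) < del -> Rabs (f x - f t) < eps.
Proof.
  intros Hc eps He. destruct (Hc eps He) as [del [Hd H]]. exists del. split; auto.
  intros x Hx. destruct (Req_dec x t) as [->|Hne].
  - rewrite Rminus_diag, Rabs_R0. auto.
  - apply (H x). split. split. exact I. auto. exact Hx.
Qed.

Lemma cont_g1 t : continuity_pt g1 t.
Proof. apply derivable_continuous_pt, ex_derive_Reals_0, ex_d1. Qed.
Lemma cont_g2 t : continuity_pt g2 t.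
Proof. apply derivable_continuous_pt, ex_derive_Reals_0, ex_d2. Qed.

Lemma cont_g t eps : 0 < eps -> exists del, 0 < del /\ forall x, Rabs (x - t) < del ->
  Rabs (g1 x - g1 t) < eps /\ Rabs (g2 x - g2 t) < eps.
Proof.
  intros He. destruct (cont_eps g1 t (cont_g1 t) eps He) as [d1 [Hd1 H1]].
  destruct (cont_eps g2 t (cont_g2 t) eps He) as [d2 [Hd2 H2]].
  exists (Rmin d1 d2). split. apply Rmin_pos; auto.
  intros x Hx. split; [apply H1|apply H2]; eapply Rlt_le_trans; eauto; [apply Rmin_l|apply Rmin_r].
Qed.

Lemma bound_g : exists B, 0 < B /\ forall x, Rabs (g1 x) <= B /\ Rabs (g2 x) <= B.
Proof.
  destruct (continuity_ab_maj (fun t => Rabs (g1 t) + Rabs (g2 t)) 0 P) as [Mx [HM _]].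
  - left; apply HP.
  - intros c _. apply continuity_pt_plus.
    apply (continuity_pt_comp g1 Rabs). apply cont_g1. apply Rcontinuity_abs.
    apply (continuity_pt_comp g2 Rabs). apply cont_g2. apply Rcontinuity_abs.
  - exists (Rabs (g1 Mx) + Rabs (g2 Mx) + 1). split.
    { pose proof (Rabs_pos (g1 Mx)); pose proof (Rabs_pos (g2 Mx)); lra. }
    intros x. destruct (reduce_mod P 0 x HP) as [k Hk].
    destruct (perZ k x) as [A B]. specialize (HM (x + IZR k * P)). rewrite A, B in HM.
    assert (HM' : Rabs (g1 x) + Rabs (g2 x) <= Rabs (g1 Mx) + Rabs (g2 Mx)) by (apply HM; lra).
    pose proof (Rabs_pos (g1 x)); pose proof (Rabs_pos (g2 x)). split; lra.
Qed.

Lemma pr_per k t psi : pr g1 g2 (t + IZR k * P) psi = pr g1 g2 t psi.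
Proof. unfold pr. destruct (perZ k t) as [A B]. rewrite A, B. auto. Qed.
Lemma prd_per k t psi : prd g1 g2 (t + IZR k * P) psi = prd g1 g2 t psi.
Proof. unfold prd. destruct (perZ k t) as [A B]. rewrite A, B. auto. Qed.

Lemma ismax_per k t psi : ismax g1 g2 t psi -> ismax g1 g2 (t + IZR k * P) psi.
Proof. unfold ismax. intros H t'. rewrite pr_per. auto. Qed.

Lemma attain psi : exists t, ismax g1 g2 t psi.
Proof.
  destruct (continuity_ab_maj (fun t => pr g1 g2 t psi) 0 P) as [Mx [HM _]].
  - left; apply HP.
  - intros c _. unfold pr. apply continuity_pt_plus; apply continuity_pt_mult.
    apply cont_g1. apply continuity_pt_const; intros ? ?; reflexivity.
    apply cont_g2. apply continuity_pt_const; intros ? ?; reflexivity.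
  - exists Mx. intros x. destruct (reduce_mod P 0 x HP) as [k Hk].
    rewrite <- (pr_per k). apply HM. lra.
Qed.

Lemma support_val t psi : ismax g1 g2 t psi -> support_fun g1 g2 psi = pr g1 g2 t psi.
Proof.
  intros Hm. unfold support_fun.
  rewrite (is_lub_Rbar_unique _ (Finite (pr g1 g2 t psi))); [reflexivity|].
  split.
  - intros r [t' ->]. simpl. apply (Hm t').
  - intros b Hb. apply Hb. exists t. reflexivity.
Qed.

Lemma support_ge t psi : pr g1 g2 t psi <= support_fun g1 g2 psi.
Proof. destruct (attain psi) as [t0 H0]. rewrite (support_val t0 psi H0). apply H0. Qed.

Lemma deriv_max0 (f : R -> R) c l : derivable_pt_lim f c l -> (forall x, f x <= f c) -> l = 0.
Proof.
  intros Hd Hm. destruct (Rtotal_order l 0) as [Hl|[Hl|Hl]]; auto; exfalso.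
  - destruct (Hd (- l / 2)) as [del Hdel]. lra.
    assert (Hh : - (del / 2) <> 0) by (pose proof (cond_pos del); lra).
    specialize (Hdel (- (del/2)) Hh). assert (Rabs (- (del / 2)) < del).
    { rewrite Rabs_Ropp, Rabs_pos_eq; pose proof (cond_pos del); lra. }
    specialize (Hdel H). specialize (Hm (c + - (del/2))).
    apply Rabs_lt_between in Hdel. destruct Hdel as [A B].
    assert (E: (f (c + - (del / 2)) - f c) / - (del / 2) - l < - l / 2) by lra.
    pose proof (cond_pos del).
    assert (0 <= (f (c + - (del / 2)) - f c) / - (del / 2)).
    { set (q := (f (c + - (del / 2)) - f c) / - (del / 2)).
      assert (q * - (del / 2) = f (c + - (del / 2)) - f c) by (unfold q; field; lra). nra. }
    lra.
  - destruct (Hd (l / 2)) as [del Hdel]. lra.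
    assert (Hh : del / 2 <> 0) by (pose proof (cond_pos del); lra).
    specialize (Hdel (del/2) Hh). assert (Rabs (del / 2) < del).
    { rewrite Rabs_pos_eq; pose proof (cond_pos del); lra. }
    specialize (Hdel H). specialize (Hm (c + del/2)).
    apply Rabs_lt_between in Hdel. destruct Hdel as [A B].
    pose proof (cond_pos del).
    assert ((f (c + del / 2) - f c) / (del / 2) <= 0).
    { set (q := (f (c + del / 2) - f c) / (del / 2)).
      assert (q * (del / 2) = f (c + del / 2) - f c) by (unfold q; field; lra). nra. }
    lra.
Qed.

Lemma pr_deriv t psi : derivable_pt_lim (fun x => pr g1 g2 x psi) t
   (Derive g1 t * cos psi + Derive g2 t * sin psi).
Proof.
  apply is_derive_Reals. unfold pr. auto_derive.
  - split. apply ex_d1. split. apply ex_d2. auto.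
  - change (fun x => g1 x) with g1. change (fun x => g2 x) with g2. ring.
Qed.

Lemma half_not_congr t : forall k : Z, t + P / 2 <> t + IZR k * P.
Proof. apply not_congr_open. apply HP. pose proof HP. lra. Qed.

Lemma normal_at_max t psi : ismax g1 g2 t psi -> Derive g1 t = - sin psi /\ Derive g2 t = cos psi.
Proof.
  intros Hm. pose proof (deriv_max0 _ _ _ (pr_deriv t psi) (fun x => Hm x)) as H0.
  pose proof (unit_d t) as U. pose proof (sin2_cos2 psi) as U2. unfold Rsqr in U2.
  set (d1 := Derive g1 t) in *. set (d2 := Derive g2 t) in *.
  set (lam := - d1 * sin psi + d2 * cos psi).
  assert (E1 : d1 = - lam * sin psi).
  { transitivity (d1 * (sin psi * sin psi + cos psi * cos psi) - cos psi * (d1 * cos psi + d2 * sin psi)).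
    rewrite H0, U2. ring. unfold lam; ring. }
  assert (E2 : d2 = lam * cos psi).
  { transitivity (d2 * (sin psi * sin psi + cos psi * cos psi) - sin psi * (d1 * cos psi + d2 * sin psi)).
    rewrite H0, U2. ring. unfold lam; ring. }
  assert (L2 : lam * lam = 1) by (rewrite E1, E2 in U; nra).
  assert (Hl : lam = 1 \/ lam = -1) by nra.
  destruct Hl as [Hl|Hl].
  - rewrite Hl in E1, E2. split; lra.
  - exfalso. pose proof (SC t (t + P/2) (half_not_congr t)) as S.
    fold d1 d2 in S. rewrite E1, E2, Hl in S.
    specialize (Hm (t + P/2)). unfold pr in Hm. nra.
Qed.

Lemma max_of_normal t psi : Derive g1 t = - sin psi -> Derive g2 t = cos psi -> ismax g1 g2 t psi.
Proof.
  intros E1 E2 t'. destruct (Classical_Prop.classic (exists k : Z, t' = t + IZR k * P)) as [[k ->]|Hn].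
  - rewrite pr_per. lra.
  - assert (Hk : forall k : Z, t' <> t + IZR k * P) by (intros k E; apply Hn; eauto).
    pose proof (SC t t' Hk) as S. rewrite E1, E2 in S. unfold pr. nra.
Qed.

Lemma max_strict t psi t' : ismax g1 g2 t psi -> (forall k : Z, t' <> t + IZR k * P) ->
  pr g1 g2 t' psi < pr g1 g2 t psi.
Proof.
  intros Hm Hk. destruct (normal_at_max t psi Hm) as [E1 E2].
  pose proof (SC t t' Hk) as S. rewrite E1, E2 in S. unfold pr. nra.
Qed.

Lemma cos_lip a b : Rabs (cos a - cos b) <= Rabs (a - b).
Proof.
  destruct (MVT_abs cos (fun x => - sin x) b a) as [c [Hc _]].
  { intros; apply derivable_pt_lim_cos. }
  rewrite Hc. rewrite Rabs_Ropp. pose proof (Rabs_pos (a - b)).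
  pose proof (SIN_bound c). assert (Rabs (sin c) <= 1) by (apply Rabs_le; lra). nra.
Qed.

Lemma sin_lip a b : Rabs (sin a - sin b) <= Rabs (a - b).
Proof.
  destruct (MVT_abs sin cos b a) as [c [Hc _]].
  { intros; apply derivable_pt_lim_sin. }
  rewrite Hc. pose proof (Rabs_pos (a - b)).
  pose proof (COS_bound c). assert (Rabs (cos c) <= 1) by (apply Rabs_le; lra). nra.
Qed.

Lemma pr_lip B x a b : Rabs (g1 x) <= B -> Rabs (g2 x) <= B ->
  Rabs (pr g1 g2 x a - pr g1 g2 x b) <= 2 * B * Rabs (a - b).
Proof.
  intros H1 H2. unfold pr.
  replace (g1 x * cos a + g2 x * sin a - (g1 x * cos b + g2 x * sin b))
    with (g1 x * (cos a - cos b) + g2 x * (sin a - sin b)) by ring.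
  eapply Rle_trans. apply Rabs_triang. rewrite !Rabs_mult.
  pose proof (cos_lip a b); pose proof (sin_lip a b).
  pose proof (Rabs_pos (g1 x)); pose proof (Rabs_pos (g2 x)); pose proof (Rabs_pos (cos a - cos b));
  pose proof (Rabs_pos (sin a - sin b)). nra.
Qed.

Lemma max_cont t psi : ismax g1 g2 t psi -> forall eta, 0 < eta ->
  exists del, 0 < del /\ forall psi' t', Rabs (psi' - psi) < del -> ismax g1 g2 t' psi' ->
    exists k : Z, Rabs (t' + IZR k * P - t) < eta.
Proof.
  intros Hm eta Heta. pose proof HP as HP.
  set (e := Rmin eta (P / 2)).
  assert (He : 0 < e) by (apply Rmin_pos; lra).
  assert (He1 : e <= eta) by apply Rmin_l. assert (He2 : e <= P / 2) by apply Rmin_r.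
  destruct (continuity_ab_min (fun x => pr g1 g2 t psi - pr g1 g2 x psi) (t + e) (t + P - e)) as [x0 [Hx0 Hr]].
  { lra. }
  { intros c _. unfold pr. apply continuity_pt_minus. apply continuity_pt_const; intros ? ?; reflexivity.
    apply continuity_pt_plus; apply continuity_pt_mult.
    apply cont_g1. apply continuity_pt_const; intros ? ?; reflexivity.
    apply cont_g2. apply continuity_pt_const; intros ? ?; reflexivity. }
  set (m := pr g1 g2 t psi - pr g1 g2 x0 psi) in *.
  assert (Hmpos : 0 < m).
  { unfold m. apply Rlt_Rminus. apply max_strict; auto. apply not_congr_open; auto. lra. }
  destruct bound_g as [B [HB HBb]].
  exists (m / (4 * B)). split. { apply Rdiv_lt_0_compat; lra. }
  intros psi' t' Hpsi Hm'.
  destruct (reduce_mod P (t + e) t' HP) as [k Hk].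
  set (t'' := t' + IZR k * P) in *.
  destruct (Rle_lt_dec t'' (t + P - e)) as [Hle|Hgt].
  - exfalso.
    assert (F : m <= pr g1 g2 t psi - pr g1 g2 t'' psi) by (apply Hx0; lra).
    assert (M' : pr g1 g2 t psi' <= pr g1 g2 t'' psi').
    { apply (ismax_per k t' psi' Hm'). }
    destruct (HBb t) as [B1 B2]. destruct (HBb t'') as [B3 B4].
    pose proof (pr_lip B t psi' psi B1 B2) as L1.
    pose proof (pr_lip B t'' psi' psi B3 B4) as L2.
    apply Rabs_le_between in L1. apply Rabs_le_between in L2.
    assert (Hd : 4 * B * Rabs (psi' - psi) < m).
    { apply (Rmult_lt_compat_l (4 * B)) in Hpsi; [|lra].
      replace (4 * B * (m / (4 * B))) with m in Hpsi by (field; lra). lra. }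
    lra.
  - exists (k - 1)%Z. rewrite minus_IZR.
    replace (t' + (IZR k - 1) * P - t) with (t'' - P - t) by (unfold t''; ring).
    apply Rabs_def1; lra.
Qed.

Lemma pr_psi_deriv t psi : derivable_pt_lim (fun a => pr g1 g2 t a) psi (prd g1 g2 t psi).
Proof. apply is_derive_Reals. unfold pr, prd. auto_derive; auto. ring. Qed.

Lemma support_deriv t psi : ismax g1 g2 t psi ->
  is_derive (support_fun g1 g2) psi (prd g1 g2 t psi).
Proof.
  intros Hm. apply is_derive_Reals. intros eps Heps.
  destruct (pr_psi_deriv t psi (eps / 2)) as [d1 Hd1]. lra.
  destruct (cont_g t (eps / 4)) as [eta [Heta Hg]]. lra.
  destruct (max_cont t psi Hm eta Heta) as [d2 [Hd2 Hc]].
  assert (Hdp : 0 < Rmin d1 d2) by (apply Rmin_pos; [apply cond_pos|lra]).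
  exists (mkposreal _ Hdp). intros h Hh0 Hh. simpl in Hh.
  assert (Hh1 : Rabs h < d1) by (eapply Rlt_le_trans; [exact Hh|apply Rmin_l]).
  assert (Hh2 : Rabs h < d2) by (eapply Rlt_le_trans; [exact Hh|apply Rmin_r]).
  specialize (Hd1 h Hh0 Hh1).
  destruct (attain (psi + h)) as [t' Ht'].
  destruct (Hc (psi + h) t') as [k Hk]. { replace (psi + h - psi) with h by ring. auto. } auto.
  set (t'' := t' + IZR k * P) in *.
  assert (Ht'' : ismax g1 g2 t'' (psi + h)) by (apply ismax_per; auto).
  rewrite (support_val t'' (psi + h) Ht''), (support_val t psi Hm).
  destruct (Hg t'' Hk) as [G1 G2].
  set (r := pr g1 g2 t'' (psi + h) - pr g1 g2 t (psi + h)).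
  assert (R0 : 0 <= r) by (unfold r; pose proof (Ht'' t); lra).
  assert (R1 : r <= (g1 t'' - g1 t) * (cos (psi + h) - cos psi) + (g2 t'' - g2 t) * (sin (psi + h) - sin psi)).
  { unfold r. pose proof (Hm t''). unfold pr in *. nra. }
  assert (R2 : r <= eps / 2 * Rabs h).
  { eapply Rle_trans. apply R1. eapply Rle_trans. apply Rle_abs.
    eapply Rle_trans. apply Rabs_triang. rewrite !Rabs_mult.
    pose proof (cos_lip (psi + h) psi); pose proof (sin_lip (psi + h) psi).
    replace (psi + h - psi) with h in * by ring.
    pose proof (Rabs_pos (cos (psi + h) - cos psi)); pose proof (Rabs_pos (sin (psi + h) - sin psi)).
    pose proof (Rabs_pos (g1 t'' - g1 t)); pose proof (Rabs_pos (g2 t'' - g2 t)). pose proof (Rabs_pos h). nra. }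
  replace ((pr g1 g2 t'' (psi + h) - pr g1 g2 t psi) / h - prd g1 g2 t psi)
    with (((pr g1 g2 t (psi + h) - pr g1 g2 t psi) / h - prd g1 g2 t psi) + r / h) by (unfold r; field; auto).
  eapply Rle_lt_trans. apply Rabs_triang.
  assert (Rabs (r / h) <= eps / 2).
  { unfold Rdiv. rewrite Rabs_mult, Rabs_inv. rewrite (Rabs_pos_eq r R0).
    assert (0 < Rabs h) by (apply Rabs_pos_lt; auto).
    apply (Rmult_le_reg_r (Rabs h)); auto. field_simplify; lra. }
  lra.
Qed.

Lemma pr_minus t p d : pr g1 g2 t (p - d) = pr g1 g2 t p * cos d - prd g1 g2 t p * sin d.
Proof. unfold pr, prd. rewrite cos_minus, sin_minus. ring. Qed.
Lemma pr_plus t p d : pr g1 g2 t (p + d) = pr g1 g2 t p * cos d + prd g1 g2 t p * sin d.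
Proof. unfold pr, prd. rewrite cos_plus, sin_plus. ring. Qed.
Lemma prd_minus t p d : prd g1 g2 t (p - d) = prd g1 g2 t p * cos d + pr g1 g2 t p * sin d.
Proof. unfold pr, prd. rewrite cos_minus, sin_minus. ring. Qed.
Lemma prd_plus t p d : prd g1 g2 t (p + d) = prd g1 g2 t p * cos d - pr g1 g2 t p * sin d.
Proof. unfold pr, prd. rewrite cos_plus, sin_plus. ring. Qed.

Lemma half_split a b : a = (a + b) / 2 - (b - a) / 2 /\ b = (a + b) / 2 + (b - a) / 2.
Proof. split; field. Qed.

Lemma S_d1 t a b : ismax g1 g2 t ((a + b) / 2) ->
  is_derive (fun x => Sgen g1 g2 x b) a (- pr g1 g2 t a).
Proof.
  intros Hm. pose proof (support_deriv t _ Hm) as Hd.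
  unfold Sgen. auto_derive.
  - exists (prd g1 g2 t ((a + b) / 2)). exact Hd.
  - change ((a + b) * / 2) with ((a + b) / 2). change ((b + - a) * / 2) with ((b - a) / 2).
    replace (Derive (fun x => support_fun g1 g2 x) ((a + b) / 2)) with (prd g1 g2 t ((a + b) / 2))
      by (symmetry; apply is_derive_unique; auto).
    rewrite (support_val t _ Hm).
    replace (pr g1 g2 t a) with (pr g1 g2 t ((a + b) / 2 - (b - a) / 2)) by (f_equal; field).
    rewrite pr_minus. field.
Qed.

Lemma S_d2 t a b : ismax g1 g2 t ((a + b) / 2) ->
  is_derive (fun x => Sgen g1 g2 a x) b (pr g1 g2 t b).
Proof.
  intros Hm. pose proof (support_deriv t _ Hm) as Hd.
  unfold Sgen. auto_derive.
  - exists (prd g1 g2 t ((a + b) / 2)). exact Hd.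
  - change ((a + b) * / 2) with ((a + b) / 2). change ((b + - a) * / 2) with ((b - a) / 2).
    replace (Derive (fun x => support_fun g1 g2 x) ((a + b) / 2)) with (prd g1 g2 t ((a + b) / 2))
      by (symmetry; apply is_derive_unique; auto).
    rewrite (support_val t _ Hm).
    replace (pr g1 g2 t b) with (pr g1 g2 t ((a + b) / 2 + (b - a) / 2)) by (f_equal; field).
    rewrite pr_plus. field.
Qed.

Lemma S_val t a b : ismax g1 g2 t ((a + b) / 2) ->
  Sgen g1 g2 a b = prd g1 g2 t a - prd g1 g2 t b.
Proof.
  intros Hm. unfold Sgen. rewrite (support_val t _ Hm).
  replace (prd g1 g2 t a) with (prd g1 g2 t ((a + b) / 2 - (b - a) / 2)) by (f_equal; field).
  replace (prd g1 g2 t b) with (prd g1 g2 t ((a + b) / 2 + (b - a) / 2)) by (f_equal; field).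
  rewrite prd_minus, prd_plus. ring.
Qed.

Lemma S_ge x a b : 0 <= sin ((b - a) / 2) ->
  prd g1 g2 x a - prd g1 g2 x b <= Sgen g1 g2 a b.
Proof.
  intros Hs. unfold Sgen.
  replace (prd g1 g2 x a) with (prd g1 g2 x ((a + b) / 2 - (b - a) / 2)) by (f_equal; field).
  replace (prd g1 g2 x b) with (prd g1 g2 x ((a + b) / 2 + (b - a) / 2)) by (f_equal; field).
  rewrite prd_minus, prd_plus. pose proof (support_ge x ((a + b) / 2)). nra.
Qed.

Lemma chord_pos a b : a < b < a + P -> 0 < (g1 b - g1 a) ^ 2 + (g2 b - g2 a) ^ 2.
Proof.
  intros Hab. pose proof (SC a b (not_congr_open P a b HP Hab)) as S.
  destruct (Req_dec (g1 b - g1 a) 0) as [E1|E1].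
  - destruct (Req_dec (g2 b - g2 a) 0) as [E2|E2].
    + rewrite E1, E2 in S. lra.
    + assert (0 < (g2 b - g2 a) ^ 2) by (apply pow2_gt_0; auto). pose proof (pow2_ge_0 (g1 b - g1 a)). lra.
  - assert (0 < (g1 b - g1 a) ^ 2) by (apply pow2_gt_0; auto). pose proof (pow2_ge_0 (g2 b - g2 a)). lra.
Qed.

Lemma L_pos a b : 0 < (g1 b - g1 a) ^ 2 + (g2 b - g2 a) ^ 2 -> 0 < Lgen g1 g2 a b.
Proof. intros H. unfold Lgen. apply sqrt_lt_R0. auto. Qed.

Lemma L_sq a b : Lgen g1 g2 a b * Lgen g1 g2 a b = (g1 b - g1 a) ^ 2 + (g2 b - g2 a) ^ 2.
Proof. unfold Lgen. apply sqrt_sqrt. pose proof (pow2_ge_0 (g1 b - g1 a)); pose proof (pow2_ge_0 (g2 b - g2 a)); lra. Qed.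

Lemma chord_prd a b th : chord g1 g2 a b th -> prd g1 g2 b th - prd g1 g2 a th = Lgen g1 g2 a b.
Proof.
  intros [E1 E2]. unfold prd.
  replace (- g1 b * sin th + g2 b * cos th - (- g1 a * sin th + g2 a * cos th))
    with (- (g1 b - g1 a) * sin th + (g2 b - g2 a) * cos th) by ring.
  rewrite E1, E2. pose proof (sin2_cos2 th) as H. unfold Rsqr in H.
  transitivity (Lgen g1 g2 a b * (sin th * sin th + cos th * cos th)). ring. rewrite H; ring.
Qed.

Lemma chord_pr a b th : chord g1 g2 a b th -> pr g1 g2 b th = pr g1 g2 a th.
Proof.
  intros [E1 E2]. unfold pr.
  assert ((g1 b - g1 a) * cos th + (g2 b - g2 a) * sin th = 0) by (rewrite E1, E2; ring). lra.
Qed.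

Lemma le_sqrt_of_sq x y : x * x <= y -> x <= sqrt y.
Proof.
  intros H. destruct (Rle_dec x 0). { pose proof (sqrt_pos y). lra. }
  rewrite <- (sqrt_square x) by lra. apply sqrt_le_1_alt. auto.
Qed.

Lemma prd_le_L a b th : prd g1 g2 b th - prd g1 g2 a th <= Lgen g1 g2 a b.
Proof.
  unfold Lgen, prd. apply le_sqrt_of_sq.
  pose proof (sin2_cos2 th). unfold Rsqr in H.
  set (u := g1 b - g1 a). set (v := g2 b - g2 a).
  replace (- g1 b * sin th + g2 b * cos th - (- g1 a * sin th + g2 a * cos th))
    with (- u * sin th + v * cos th) by (unfold u, v; ring).
  assert (0 <= (u * cos th + v * sin th) ^ 2) by apply pow2_ge_0.
  assert ((- u * sin th + v * cos th) * (- u * sin th + v * cos th) + (u * cos th + v * sin th) ^ 2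
     = (u ^ 2 + v ^ 2) * (sin th * sin th + cos th * cos th)) by ring.
  rewrite H in H1. lra.
Qed.

Lemma L_d1 a b : 0 < (g1 b - g1 a) ^ 2 + (g2 b - g2 a) ^ 2 ->
  is_derive (fun x => Lgen g1 g2 x b) a
    (- ((g1 b - g1 a) * Derive g1 a + (g2 b - g2 a) * Derive g2 a) / Lgen g1 g2 a b).
Proof.
  intros Hp. unfold Lgen. auto_derive.
  - repeat split; try apply ex_d1; try apply ex_d2; try nra.
  - change (fun x => g1 x) with g1. change (fun x => g2 x) with g2.
    assert (0 < sqrt ((g1 b - g1 a) ^ 2 + (g2 b - g2 a) ^ 2)) by (apply sqrt_lt_R0; auto).
    replace ((g1 b + - g1 a) * ((g1 b + - g1 a) * 1) + (g2 b + - g2 a) * ((g2 b + - g2 a) * 1))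
      with ((g1 b - g1 a) ^ 2 + (g2 b - g2 a) ^ 2) by ring.
    field. lra.
Qed.

Lemma L_d2 a b : 0 < (g1 b - g1 a) ^ 2 + (g2 b - g2 a) ^ 2 ->
  is_derive (fun x => Lgen g1 g2 a x) b
    (((g1 b - g1 a) * Derive g1 b + (g2 b - g2 a) * Derive g2 b) / Lgen g1 g2 a b).
Proof.
  intros Hp. unfold Lgen. auto_derive.
  - repeat split; try apply ex_d1; try apply ex_d2; try nra.
  - change (fun x => g1 x) with g1. change (fun x => g2 x) with g2.
    assert (0 < sqrt ((g1 b - g1 a) ^ 2 + (g2 b - g2 a) ^ 2)) by (apply sqrt_lt_R0; auto).
    replace ((g1 b + - g1 a) * ((g1 b + - g1 a) * 1) + (g2 b + - g2 a) * ((g2 b + - g2 a) * 1))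
      with ((g1 b - g1 a) ^ 2 + (g2 b - g2 a) ^ 2) by ring.
    field. lra.
Qed.

Lemma TA q phi : Pair g1 g2 P q phi -> m_config (Lgen g1 g2) q -> m_config (Sgen g1 g2) phi.
Proof.
  intros HP2 Hm M N HMN.
  destruct (Hm M (N + 1)%Z ltac:(lia)) as [eL [HeL HL]].
  set (Q := fun k d => forall psi' t', Rabs (psi' - (phi (k - 1)%Z + phi k) / 2) < d ->
      ismax g1 g2 t' psi' -> exists j : Z, Rabs (t' + IZR j * P - q k) < eL).
  destruct (unif Q (M + 1)%Z N) as [d [Hd HQ]].
  { intros k d0 d' Hd' HQ0 psi' t' H1 H2. apply (HQ0 psi' t'); auto. lra. }
  { intros k Hk. destruct (HP2 (k - 1)%Z) as (_ & _ & Hmx & _).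
    replace (k - 1 + 1)%Z with k in Hmx by lia.
    destruct (max_cont _ _ Hmx eL HeL) as [d0 [Hd0 H0]]. exists d0. split; auto. }
  exists d. split; auto.
  intros x HxM HxN Hx.
  assert (Hx' : forall i, (M <= i <= N)%Z -> Rabs (x i - phi i) < d).
  { intros i Hi. destruct (Z.eq_dec i M) as [->|H1]. rewrite HxM, Rminus_diag, Rabs_R0; auto.
    destruct (Z.eq_dec i N) as [->|H2]. rewrite HxN, Rminus_diag, Rabs_R0; auto. apply Hx. lia. }
  destruct (choice_Z (fun k t => ((M + 1 <= k <= N)%Z -> ismax g1 g2 t ((x (k - 1)%Z + x k) / 2) /\ Rabs (t - q k) < eL)
       /\ (~ (M + 1 <= k <= N)%Z -> t = q k))) as [s' Hs'].
  { intros k. destruct (Z_le_dec (M + 1) k) as [H1|H1]; [destruct (Z_le_dec k N) as [H2|H2]|].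
    - destruct (attain ((x (k - 1)%Z + x k) / 2)) as [t0 Ht0].
      destruct (HQ k ltac:(lia) ((x (k - 1)%Z + x k) / 2) t0) as [j Hj]; auto.
      { pose proof (Hx' (k - 1)%Z ltac:(lia)). pose proof (Hx' k ltac:(lia)).
        replace ((x (k - 1)%Z + x k) / 2 - (phi (k - 1)%Z + phi k) / 2)
          with ((x (k - 1)%Z - phi (k - 1)%Z) / 2 + (x k - phi k) / 2) by field.
        eapply Rle_lt_trans. apply Rabs_triang. unfold Rdiv. rewrite !Rabs_mult.
        rewrite (Rabs_pos_eq (/ 2)) by lra. lra. }
      exists (t0 + IZR j * P). split.
      + intros _. split. apply ismax_per; auto. auto.
      + intros C; lia.
    - exists (q k). split. intros; lia. auto.
    - exists (q k). split. intros; lia. auto. }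
  set (K := Z.to_nat (N - M)).
  assert (EK : (M + Z.of_nat K)%Z = N) by (unfold K; lia).
  assert (EK1 : Z.to_nat (N + 1 - M) = S K) by (unfold K; lia).
  assert (Es'M : s' M = q M) by (apply (proj2 (Hs' M)); lia).
  assert (Es'N1 : s' (N + 1)%Z = q (N + 1)%Z) by (apply (proj2 (Hs' (N + 1)%Z)); lia).
  assert (A1 : seg_sum (Sgen g1 g2) x M K <= seg_sum (Lgen g1 g2) s' M K
             + prd g1 g2 (s' M) (x M) - prd g1 g2 (s' N) (x N)).
  { rewrite <- EK.
    apply (seg_sum_le _ _ _ _ (fun n => prd g1 g2 (s' n) (x n))).
    intros j Hj. set (n := (M + Z.of_nat j)%Z).
    destruct (proj1 (Hs' (n + 1)%Z) ltac:(unfold n, K in *; lia)) as [Hmx _].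
    replace (n + 1 - 1)%Z with n in Hmx by lia.
    rewrite (S_val _ _ _ Hmx). pose proof (prd_le_L (s' n) (s' (n + 1)%Z) (x n)). lra. }
  assert (A2 : - prd g1 g2 (s' N) (x N) <= Lgen g1 g2 (s' N) (s' (N + 1)%Z) - prd g1 g2 (q (N + 1)%Z) (phi N)).
  { rewrite HxN, Es'N1. pose proof (prd_le_L (s' N) (q (N + 1)%Z) (phi N)). lra. }
  assert (A3 : seg_sum (Lgen g1 g2) s' M (Z.to_nat (N + 1 - M)) = seg_sum (Lgen g1 g2) s' M K
      + Lgen g1 g2 (s' N) (s' (N + 1)%Z)).
  { rewrite EK1, seg_sum_snoc, EK. reflexivity. }
  assert (B1 : seg_sum (Sgen g1 g2) phi M K = seg_sum (Lgen g1 g2) q M K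
             + prd g1 g2 (q M) (phi M) - prd g1 g2 (q N) (phi N)).
  { rewrite <- EK.
    apply (seg_sum_eq _ _ _ _ (fun n => prd g1 g2 (q n) (phi n))).
    intros j Hj. set (n := (M + Z.of_nat j)%Z).
    destruct (HP2 n) as (_ & _ & Hmx & Hch).
    rewrite (S_val _ _ _ Hmx). rewrite <- (chord_prd _ _ _ Hch). ring. }
  assert (B2 : prd g1 g2 (q N) (phi N) = prd g1 g2 (q (N + 1)%Z) (phi N) - Lgen g1 g2 (q N) (q (N + 1)%Z)).
  { destruct (HP2 N) as (_ & _ & _ & Hch). rewrite <- (chord_prd _ _ _ Hch). ring. }
  assert (B3 : seg_sum (Lgen g1 g2) q M (Z.to_nat (N + 1 - M)) = seg_sum (Lgen g1 g2) q M K
      + Lgen g1 g2 (q N) (q (N + 1)%Z)).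
  { rewrite EK1, seg_sum_snoc, EK. reflexivity. }
  assert (C : seg_sum (Lgen g1 g2) s' M (Z.to_nat (N + 1 - M)) <= seg_sum (Lgen g1 g2) q M (Z.to_nat (N + 1 - M))).
  { apply HL; auto. intros i Hi. destruct (Z_le_dec i N).
    - apply (proj1 (Hs' i)). lia.
    - assert (i = N + 1)%Z by lia. lia. }
  rewrite Es'M, HxM in A1. fold K. lra.
Qed.

Lemma lin_bound x y th : Rabs (x * cos th + y * sin th) <= Rabs x + Rabs y /\
                          Rabs (- x * sin th + y * cos th) <= Rabs x + Rabs y.
Proof.
  assert (Hc : Rabs (cos th) <= 1) by (apply Rabs_le; apply COS_bound).
  assert (Hs : Rabs (sin th) <= 1) by (apply Rabs_le; apply SIN_bound).
  pose proof (Rabs_pos x); pose proof (Rabs_pos y).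
  split; eapply Rle_trans; try apply Rabs_triang; rewrite !Rabs_mult; try rewrite Rabs_Ropp; nra.
Qed.

Lemma small_asin b r : 0 < r <= 1 -> Rabs b < sin r -> Rabs (asin b) < r.
Proof.
  intros Hr Hb. pose proof PI2_1 as Hpi. pose proof (asin_bound b) as [A1 A2].
  assert (Hb1 : -1 <= b <= 1).
  { pose proof (SIN_bound r). apply Rabs_lt_between in Hb. lra. }
  pose proof (sin_asin b Hb1) as Es.
  apply Rabs_def1.
  - destruct (Rlt_le_dec (asin b) r) as [H|H]; auto. exfalso.
    assert (sin r <= sin (asin b)) by (apply sin_incr_1; lra).
    apply Rabs_lt_between in Hb. lra.
  - destruct (Rlt_le_dec (- r) (asin b)) as [H|H]; auto. exfalso.
    assert (H1 : sin (asin b) <= sin (- r)) by (apply sin_incr_1; lra).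
    rewrite sin_neg in H1. apply Rabs_lt_between in Hb. lra.
Qed.

Lemma chord_cont a b th0 : chord g1 g2 a b th0 -> 0 < Lgen g1 g2 a b ->
  forall rho, 0 < rho -> exists del, 0 < del /\ forall a' b', Rabs (a' - a) < del -> Rabs (b' - b) < del ->
    exists th, Rabs (th - th0) < rho /\ chord g1 g2 a' b' th.
Proof.
  intros [C1 C2] HD rho Hrho. set (D := Lgen g1 g2 a b) in *.
  set (r := Rmin (rho / 2) 1).
  assert (Hr : 0 < r <= 1) by (split; [apply Rmin_pos; lra | apply Rmin_r]).
  assert (Hr2 : r <= rho / 2) by apply Rmin_l.
  pose proof PI2_1.
  assert (Hs : 0 < sin r) by (apply sin_gt_0; lra).
  set (kap := Rmin (D / 4) (D * sin r / 8)).
  assert (HDs : 0 < D * sin r) by (apply Rmult_lt_0_compat; lra).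
  assert (Hk : 0 < kap) by (apply Rmin_pos; lra).
  assert (Hk1 : kap <= D / 4) by apply Rmin_l. assert (Hk2 : kap <= D * sin r / 8) by apply Rmin_r.
  destruct (cont_g a (kap / 2)) as [da [Hda Ga]]. lra.
  destruct (cont_g b (kap / 2)) as [db [Hdb Gb]]. lra.
  exists (Rmin da db). split. apply Rmin_pos; auto.
  intros a' b' Ha Hb.
  destruct (Ga a') as [Ga1 Ga2]. eapply Rlt_le_trans; [exact Ha|apply Rmin_l].
  destruct (Gb b') as [Gb1 Gb2]. eapply Rlt_le_trans; [exact Hb|apply Rmin_r].
  set (e1 := (g1 b' - g1 a') - (g1 b - g1 a)). set (e2 := (g2 b' - g2 a') - (g2 b - g2 a)).
  assert (He1 : Rabs e1 < kap).
  { unfold e1. replace (g1 b' - g1 a' - (g1 b - g1 a)) with ((g1 b' - g1 b) - (g1 a' - g1 a)) by ring.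
    eapply Rle_lt_trans. apply Rabs_triang. rewrite Rabs_Ropp. lra. }
  assert (He2 : Rabs e2 < kap).
  { unfold e2. replace (g2 b' - g2 a' - (g2 b - g2 a)) with ((g2 b' - g2 b) - (g2 a' - g2 a)) by ring.
    eapply Rle_lt_trans. apply Rabs_triang. rewrite Rabs_Ropp. lra. }
  pose proof (sin2_cos2 th0) as U. unfold Rsqr in U.
  set (s0 := sin th0) in *. set (c0 := cos th0) in *.
  set (A := - (g1 b' - g1 a') * s0 + (g2 b' - g2 a') * c0).
  set (Bv := (g1 b' - g1 a') * c0 + (g2 b' - g2 a') * s0).
  assert (EA : A = D + (- e1 * s0 + e2 * c0)).
  { unfold A, e1, e2. replace (g1 b' - g1 a') with (e1 + (g1 b - g1 a)) by (unfold e1; ring).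
    replace (g2 b' - g2 a') with (e2 + (g2 b - g2 a)) by (unfold e2; ring). fold e1 e2.
    rewrite C1, C2. fold s0 c0. 
    transitivity (D * (s0 * s0 + c0 * c0) + (- e1 * s0 + e2 * c0)). ring. rewrite U. ring. }
  assert (EB : Bv = e1 * c0 + e2 * s0).
  { unfold Bv, e1, e2. replace (g1 b' - g1 a') with (e1 + (g1 b - g1 a)) by (unfold e1; ring).
    replace (g2 b' - g2 a') with (e2 + (g2 b - g2 a)) by (unfold e2; ring). fold e1 e2.
    rewrite C1, C2. fold s0 c0. ring. }
  destruct (lin_bound e1 e2 th0) as [LB1 LB2]. fold s0 c0 in LB1, LB2.
  assert (HA : D / 2 < A).
  { rewrite EA. assert (H0 : Rabs (- e1 * s0 + e2 * c0) < 2 * kap) by lra. apply Rabs_lt_between in H0. lra. }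
  assert (HBv : Rabs Bv < 2 * kap) by (rewrite EB; lra).
  set (D' := Lgen g1 g2 a' b').
  assert (ED' : D' * D' = A * A + Bv * Bv).
  { unfold D'. rewrite L_sq. unfold A, Bv.
    transitivity (((g1 b' - g1 a') ^ 2 + (g2 b' - g2 a') ^ 2) * (s0 * s0 + c0 * c0)).
    rewrite U; ring. ring. }
  assert (HD'0 : 0 <= D') by (unfold D', Lgen; apply sqrt_pos).
  assert (HD'A : A <= D').
  { assert (0 <= Bv * Bv) by nra. assert (A * A <= D' * D') by lra.
    destruct (Rle_lt_dec A D'); auto. nra. }
  set (beta := - Bv / D').
  assert (Hbeta : Rabs beta < sin r).
  { unfold beta. unfold Rdiv. rewrite Rabs_mult, Rabs_Ropp, Rabs_inv, (Rabs_pos_eq D') by lra.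
    apply (Rmult_lt_reg_r D'). lra. rewrite Rmult_assoc, Rinv_l by lra. rewrite Rmult_1_r.
    assert (2 * kap <= sin r * (D / 4)) by lra. nra. }
  set (al := asin beta).
  pose proof (small_asin beta r Hr Hbeta) as Hal. fold al in Hal.
  assert (Hb1 : -1 <= beta <= 1).
  { pose proof (SIN_bound r). apply Rabs_lt_between in Hbeta. lra. }
  assert (Sal : sin al = beta) by (apply sin_asin; auto).
  assert (HD'p : 0 < D') by lra.
  assert (Cal : cos al = A / D').
  { unfold al. rewrite cos_asin by auto. apply sqrt_lem_1.
    - pose proof (Rsqr_le_abs_1 beta 1). unfold Rsqr in *.
      assert (Rabs beta <= Rabs 1) by (rewrite Rabs_R1; apply Rabs_le; lra). nra.
    - apply Rdiv_le_0_compat; lra.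
    - unfold Rsqr, beta. transitivity ((A * A) / (D' * D')). field; lra.
      replace (A * A) with (D' * D' - Bv * Bv) by lra. field. lra. }
  exists (th0 + al). split.
  - replace (th0 + al - th0) with al by ring. lra.
  - fold D'. split.
    + rewrite sin_plus. fold s0 c0. rewrite Cal, Sal. unfold beta.
      transitivity (- s0 * A + c0 * Bv). 
      * unfold A, Bv. transitivity ((g1 b' - g1 a') * (s0 * s0 + c0 * c0)). rewrite U; ring. ring.
      * change (Lgen g1 g2 a' b') with D'. field. lra.
    + rewrite cos_plus. fold s0 c0. rewrite Cal, Sal. unfold beta.
      transitivity (c0 * A + s0 * Bv).
      * unfold A, Bv. transitivity ((g2 b' - g2 a') * (s0 * s0 + c0 * c0)). rewrite U; ring. ring.
      * change (Lgen g1 g2 a' b') with D'. field. lra.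
Qed.

Lemma TB q phi : Pair g1 g2 P q phi -> m_config (Sgen g1 g2) phi -> m_config (Lgen g1 g2) q.
Proof.
  intros HP2 Hm M N HMN.
  destruct (Hm (M - 1)%Z N ltac:(lia)) as [eS [HeS HS]].
  destruct (unif (fun k d => d <= phi (k + 1)%Z - phi k /\ d <= phi k + 2 * PI - phi (k + 1)%Z) (M - 1)%Z (N - 1)%Z)
    as [mg [Hmg HQ1]].
  { intros k d d' Hd [H1 H2]. split; lra. }
  { intros k _. destruct (HP2 k) as (_ & Hph & _). exists (Rmin (phi (k + 1)%Z - phi k) (phi k + 2 * PI - phi (k + 1)%Z)).
    split. apply Rmin_pos; lra. split; [apply Rmin_l|apply Rmin_r]. }
  set (rho := Rmin eS (mg / 2)).
  assert (Hrho : 0 < rho) by (apply Rmin_pos; lra).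
  assert (Hrho1 : rho <= eS) by apply Rmin_l. assert (Hrho2 : rho <= mg / 2) by apply Rmin_r.
  destruct (unif (fun k d => forall a' b', Rabs (a' - q k) < d -> Rabs (b' - q (k + 1)%Z) < d ->
        exists th, Rabs (th - phi k) < rho /\ chord g1 g2 a' b' th) M (N - 1)%Z) as [dl [Hdl HQ2]].
  { intros k d d' Hd H a' b' H1 H2. apply H; lra. }
  { intros k _. destruct (HP2 k) as (Hq & _ & _ & Hch).
    apply (chord_cont _ _ _ Hch (L_pos _ _ (chord_pos _ _ Hq)) rho Hrho). }
  exists dl. split; auto.
  intros x HxM HxN Hx.
  assert (Hx' : forall i, (M <= i <= N)%Z -> Rabs (x i - q i) < dl).
  { intros i Hi. destruct (Z.eq_dec i M) as [->|H1]. rewrite HxM, Rminus_diag, Rabs_R0; auto.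
    destruct (Z.eq_dec i N) as [->|H2]. rewrite HxN, Rminus_diag, Rabs_R0; auto. apply Hx. lia. }
  destruct (choice_Z (fun k th => ((M <= k <= N - 1)%Z -> Rabs (th - phi k) < rho /\ chord g1 g2 (x k) (x (k + 1)%Z) th)
       /\ (~ (M <= k <= N - 1)%Z -> th = phi k))) as [ph' Hph'].
  { intros k. destruct (Z_le_dec M k) as [H1|H1]; [destruct (Z_le_dec k (N - 1)) as [H2|H2]|].
    - destruct (HQ2 k ltac:(lia) (x k) (x (k + 1)%Z)) as [th Hth].
      apply Hx'; lia. apply Hx'; lia.
      exists th. split; auto. intros C; lia.
    - exists (phi k). split. intros; lia. auto.
    - exists (phi k). split. intros; lia. auto. }
  assert (Hclose : forall k, Rabs (ph' k - phi k) < rho).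
  { intros k. destruct (Z_le_dec M k) as [H1|H1]; [destruct (Z_le_dec k (N - 1)) as [H2|H2]|].
    - apply (proj1 (Hph' k)); lia.
    - rewrite (proj2 (Hph' k)) by lia. rewrite Rminus_diag, Rabs_R0. auto.
    - rewrite (proj2 (Hph' k)) by lia. rewrite Rminus_diag, Rabs_R0. auto. }
  assert (Hsin : forall n, (M - 1 <= n <= N - 1)%Z -> 0 <= sin ((ph' (n + 1)%Z - ph' n) / 2)).
  { intros n Hn. destruct (HQ1 n Hn) as [Q1 Q2].
    pose proof (Hclose n) as C1. pose proof (Hclose (n + 1)%Z) as C2.
    apply Rabs_lt_between in C1. apply Rabs_lt_between in C2.
    apply sin_ge_0; lra. }
  set (K := Z.to_nat (N - M)).
  assert (EK : (M + Z.of_nat K)%Z = N) by (unfold K; lia).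
  assert (EK1 : Z.to_nat (N - (M - 1)) = S K) by (unfold K; lia).
  assert (EpM1 : ph' (M - 1)%Z = phi (M - 1)%Z) by (apply (proj2 (Hph' (M - 1)%Z)); lia).
  assert (EpN : ph' N = phi N) by (apply (proj2 (Hph' N)); lia).
  assert (A1 : seg_sum (Lgen g1 g2) x M K <= seg_sum (Sgen g1 g2) ph' M K
             + (- prd g1 g2 (x M) (ph' M)) - (- prd g1 g2 (x N) (ph' N))).
  { rewrite <- EK.
    apply (seg_sum_le _ _ _ _ (fun n => - prd g1 g2 (x n) (ph' n))).
    intros j Hj. set (n := (M + Z.of_nat j)%Z).
    destruct (proj1 (Hph' n) ltac:(unfold n, K in *; lia)) as [_ Hch].
    rewrite <- (chord_prd _ _ _ Hch).
    pose proof (S_ge (x (n + 1)%Z) (ph' n) (ph' (n + 1)%Z) (Hsin n ltac:(unfold n, K in *; lia))). lra. }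
  assert (A2 : - prd g1 g2 (q M) (ph' M) <= Sgen g1 g2 (ph' (M - 1)%Z) (ph' M) - prd g1 g2 (q M) (phi (M - 1)%Z)).
  { pose proof (S_ge (q M) (ph' (M - 1)%Z) (ph' M)) as H.
    replace (M - 1 + 1)%Z with M in Hsin by lia.
    rewrite EpM1 in H |- *. specialize (Hsin (M - 1)%Z ltac:(lia)).
    replace (M - 1 + 1)%Z with M in Hsin by lia. rewrite EpM1 in Hsin. specialize (H Hsin). lra. }
  assert (A3 : seg_sum (Sgen g1 g2) ph' (M - 1)%Z (Z.to_nat (N - (M - 1))) =
      Sgen g1 g2 (ph' (M - 1)%Z) (ph' M) + seg_sum (Sgen g1 g2) ph' M K).
  { rewrite EK1, seg_sum_S. replace (M - 1 + 1)%Z with M by lia. reflexivity. }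
  assert (B1 : seg_sum (Lgen g1 g2) q M K = seg_sum (Sgen g1 g2) phi M K
             + (- prd g1 g2 (q M) (phi M)) - (- prd g1 g2 (q N) (phi N))).
  { rewrite <- EK.
    apply (seg_sum_eq _ _ _ _ (fun n => - prd g1 g2 (q n) (phi n))).
    intros j Hj. set (n := (M + Z.of_nat j)%Z).
    destruct (HP2 n) as (_ & _ & Hmx & Hch).
    rewrite (S_val _ _ _ Hmx). rewrite <- (chord_prd _ _ _ Hch). ring. }
  assert (B2 : - prd g1 g2 (q M) (phi M) = Sgen g1 g2 (phi (M - 1)%Z) (phi M) - prd g1 g2 (q M) (phi (M - 1)%Z)).
  { destruct (HP2 (M - 1)%Z) as (_ & _ & Hmx & _). replace (M - 1 + 1)%Z with M in Hmx by lia.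
    rewrite (S_val _ _ _ Hmx). ring. }
  assert (B3 : seg_sum (Sgen g1 g2) phi (M - 1)%Z (Z.to_nat (N - (M - 1))) =
      Sgen g1 g2 (phi (M - 1)%Z) (phi M) + seg_sum (Sgen g1 g2) phi M K).
  { rewrite EK1, seg_sum_S. replace (M - 1 + 1)%Z with M by lia. reflexivity. }
  assert (C : seg_sum (Sgen g1 g2) ph' (M - 1)%Z (Z.to_nat (N - (M - 1))) <=
              seg_sum (Sgen g1 g2) phi (M - 1)%Z (Z.to_nat (N - (M - 1)))).
  { apply HS; auto. intros i Hi. pose proof (Hclose i). lra. }
  rewrite HxM, HxN, EpN in A1. fold K. lra.
Qed.

Lemma Pair_w q phi n : Pair g1 g2 P q phi ->
  0 < sin (phi n) * Derive g2 (q n) + cos (phi n) * Derive g1 (q n).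
Proof.
  intros HP2. destruct (HP2 n) as (Hq & _ & _ & [C1 C2]).
  pose proof (SC _ _ (not_congr_open P _ _ HP Hq)) as S.
  pose proof (L_pos _ _ (chord_pos _ _ Hq)) as HD.
  rewrite C1, C2 in S. nra.
Qed.

Lemma Pair_y_bound q phi n : Pair g1 g2 P q phi -> -1 < yP g1 g2 q phi n < 1.
Proof.
  intros HP2. pose proof (Pair_w q phi n HP2) as W. unfold yP.
  pose proof (unit_d (q n)) as U. pose proof (sin2_cos2 (phi n)) as U2. unfold Rsqr in U2.
  set (w := sin (phi n) * Derive g2 (q n) + cos (phi n) * Derive g1 (q n)) in *.
  set (y := - sin (phi n) * Derive g1 (q n) + cos (phi n) * Derive g2 (q n)).
  assert (E : y * y + w * w = 1).
  { unfold y, w. transitivity ((sin (phi n) * sin (phi n) + cos (phi n) * cos (phi n)) *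
       (Derive g1 (q n) ^ 2 + Derive g2 (q n) ^ 2)). ring. rewrite U, U2. ring. }
  assert (y * y < 1) by nra. split; nra.
Qed.

Lemma Pair_L q phi : Pair g1 g2 P q phi -> gen_orbit (Lgen g1 g2) P inA_L q (yP g1 g2 q phi).
Proof.
  intros HP2 n. destruct (HP2 n) as (Hq & Hph & Hmx & Hch).
  pose proof (chord_pos _ _ Hq) as Hp. pose proof (L_pos _ _ Hp) as HD.
  split; [|split; [|split]].
  - apply Pair_y_bound; auto.
  - auto.
  - eapply is_derive_ext. intros; reflexivity.
    replace (- yP g1 g2 q phi n) with
      (- ((g1 (q (n + 1)%Z) - g1 (q n)) * Derive g1 (q n) + (g2 (q (n + 1)%Z) - g2 (q n)) * Derive g2 (q n))
         / Lgen g1 g2 (q n) (q (n + 1)%Z)).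
    apply L_d1; auto.
    destruct Hch as [C1 C2]. rewrite C1, C2. unfold yP. field. lra.
  - replace (yP g1 g2 q phi (n + 1)%Z) with
      (((g1 (q (n + 1)%Z) - g1 (q n)) * Derive g1 (q (n + 1)%Z) + (g2 (q (n + 1)%Z) - g2 (q n)) * Derive g2 (q (n + 1)%Z))
         / Lgen g1 g2 (q n) (q (n + 1)%Z)).
    apply L_d2; auto.
    destruct Hch as [C1 C2]. rewrite C1, C2. unfold yP.
    destruct (normal_at_max _ _ Hmx) as [N1 N2]. rewrite N1, N2.
    set (a := phi n) in *. set (b := phi (n + 1)%Z) in *.
    set (ps := (a + b) / 2) in *. set (de := (b - a) / 2).
    assert (Sa : sin a = sin ps * cos de - cos ps * sin de) by (rewrite <- sin_minus; f_equal; unfold ps, de; field).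
    assert (Ca : cos a = cos ps * cos de + sin ps * sin de) by (rewrite <- cos_minus; f_equal; unfold ps, de; field).
    assert (Sb : sin b = sin ps * cos de + cos ps * sin de) by (rewrite <- sin_plus; f_equal; unfold ps, de; field).
    assert (Cb : cos b = cos ps * cos de - sin ps * sin de) by (rewrite <- cos_plus; f_equal; unfold ps, de; field).
    rewrite Sa, Ca, Sb, Cb. field. lra.
Qed.

Lemma Pair_S q phi : Pair g1 g2 P q phi -> gen_orbit (Sgen g1 g2) (2 * PI) (inA_S g1 g2) phi (pP g1 g2 q phi).
Proof.
  intros HP2 n. destruct (HP2 n) as (Hq & Hph & Hmx & Hch).
  pose proof (Pair_w q phi n HP2) as W.
  split; [|split; [|split]].
  - unfold inA_S, pP. split.
    + assert (Hle : pr g1 g2 (q n) (phi n + PI) <= support_fun g1 g2 (phi n + PI)) by apply support_ge.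
      assert (E : pr g1 g2 (q n) (phi n + PI) = - pr g1 g2 (q n) (phi n)) by (unfold pr; rewrite cos_plus, sin_plus, cos_PI, sin_PI; ring).
      destruct Hle as [Hlt|Heq]; [lra|exfalso].
      assert (Hm : ismax g1 g2 (q n) (phi n + PI)).
      { intros t'. rewrite Heq. apply support_ge. }
      destruct (normal_at_max _ _ Hm) as [N1 N2]. rewrite N1, N2 in W.
      rewrite sin_plus, cos_plus, sin_PI, cos_PI in W. nra.
    + assert (Hle : pr g1 g2 (q n) (phi n) <= support_fun g1 g2 (phi n)) by apply support_ge.
      destruct Hle as [Hlt|Heq]; [lra|exfalso].
      assert (Hm : ismax g1 g2 (q n) (phi n)).
      { intros t'. rewrite Heq. apply support_ge. }
      destruct (normal_at_max _ _ Hm) as [N1 N2]. rewrite N1, N2 in W. nra.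
  - auto.
  - unfold pP. rewrite <- (chord_pr _ _ _ Hch). apply S_d1; auto.
  - unfold pP. apply S_d2; auto.
Qed.

Lemma Pair_line q phi n : Pair g1 g2 P q phi ->
  line_of_scos g1 g2 (q n) (yP g1 g2 q phi n) = line_of_phip (phi n) (pP g1 g2 q phi n).
Proof.
  intros HP2. pose proof (Pair_w q phi n HP2) as W.
  pose proof (unit_d (q n)) as U. pose proof (sin2_cos2 (phi n)) as U2. unfold Rsqr in U2.
  unfold line_of_scos, line_of_phip, pP, pr, yP, tang1, tang2, nrm1, nrm2.
  set (d1 := Derive g1 (q n)) in *. set (d2 := Derive g2 (q n)) in *.
  set (sp := sin (phi n)) in *. set (cp := cos (phi n)) in *.
  set (w := sp * d2 + cp * d1) in *.
  assert (Ew : 1 - (- sp * d1 + cp * d2) ^ 2 = w * w).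
  { unfold w. transitivity ((sp * sp + cp * cp) * (d1 ^ 2 + d2 ^ 2) - (- sp * d1 + cp * d2) ^ 2).
    rewrite U, U2; ring. ring. }
  assert (Hs : sqrt (1 - (- sp * d1 + cp * d2) ^ 2) = w).
  { rewrite Ew. apply sqrt_square. lra. }
  rewrite Hs. unfold w.
  assert (E1 : (- sp * d1 + cp * d2) * d2 + (sp * d2 + cp * d1) * d1 = cp).
  { transitivity (cp * (d1 ^ 2 + d2 ^ 2)). ring. rewrite U; ring. }
  assert (E2 : - ((- sp * d1 + cp * d2) * d1 + (sp * d2 + cp * d1) * - d2) = sp).
  { transitivity (sp * (d1 ^ 2 + d2 ^ 2)). ring. rewrite U; ring. }
  rewrite E1, E2. reflexivity.
Qed.

Lemma not_congr_back a b : a < b < a + P -> forall k : Z, a <> b + IZR k * P.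
Proof.
  intros Hab k E. apply (not_congr_open P (b - P) a HP ltac:(lra) (k + 1)%Z).
  rewrite plus_IZR. lra.
Qed.

Lemma dirA q y (n0 : Z) : gen_orbit (Lgen g1 g2) P inA_L q y ->
  exists phi, Pair g1 g2 P q phi /\ forall n, y n = yP g1 g2 q phi n.
Proof.
  intros Ho.
  set (D := fun n => Lgen g1 g2 (q n) (q (n + 1)%Z)).
  set (c1 := fun n => (g1 (q (n + 1)%Z) - g1 (q n)) / D n).
  set (c2 := fun n => (g2 (q (n + 1)%Z) - g2 (q n)) / D n).
  assert (F0 : forall n, 0 < D n).
  { intros n. destruct (Ho n) as (_ & Hq & _). apply L_pos, chord_pos; auto. }
  assert (Fu : forall n, c1 n ^ 2 + c2 n ^ 2 = 1).
  { intros n. pose proof (F0 n). pose proof (L_sq (q n) (q (n + 1)%Z)) as E. fold (D n) in E.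
    unfold c1, c2.
    transitivity (((g1 (q (n + 1)%Z) - g1 (q n)) ^ 2 + (g2 (q (n + 1)%Z) - g2 (q n)) ^ 2) / (D n * D n)).
    field; lra. rewrite <- E. field; lra. }
  assert (Fy : forall n, y n = c1 n * Derive g1 (q n) + c2 n * Derive g2 (q n)).
  { intros n. destruct (Ho n) as (_ & Hq & Hd1 & _). pose proof (F0 n).
    pose proof (L_d1 _ _ (chord_pos _ _ Hq)) as H2.
    pose proof (is_derive_unique _ _ _ Hd1) as E1. rewrite (is_derive_unique _ _ _ H2) in E1.
    fold (D n) in E1. unfold c1, c2. 
    apply Ropp_eq_compat in E1. rewrite Ropp_involutive in E1. rewrite <- E1. field. lra. }
  assert (Fy' : forall n, y (n + 1)%Z = c1 n * Derive g1 (q (n + 1)%Z) + c2 n * Derive g2 (q (n + 1)%Z)).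
  { intros n. destruct (Ho n) as (_ & Hq & _ & Hd2). pose proof (F0 n).
    pose proof (L_d2 _ _ (chord_pos _ _ Hq)) as H2.
    pose proof (is_derive_unique _ _ _ Hd2) as E1. rewrite (is_derive_unique _ _ _ H2) in E1.
    fold (D n) in E1. unfold c1, c2. rewrite <- E1. field. lra. }
  assert (Fwa : forall n, 0 < - c1 n * Derive g2 (q n) + c2 n * Derive g1 (q n)).
  { intros n. destruct (Ho n) as (_ & Hq & _). pose proof (F0 n).
    pose proof (SC _ _ (not_congr_open P _ _ HP Hq)) as S. unfold c1, c2.
    replace (- ((g1 (q (n + 1)%Z) - g1 (q n)) / D n) * Derive g2 (q n) + (g2 (q (n + 1)%Z) - g2 (q n)) / D n * Derive g1 (q n))
      with (((g1 (q (n + 1)%Z) - g1 (q n)) * - Derive g2 (q n) + (g2 (q (n + 1)%Z) - g2 (q n)) * Derive g1 (q n)) / D n)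
      by (field; lra).
    apply Rdiv_lt_0_compat; lra. }
  assert (Fwb : forall n, - c1 n * Derive g2 (q (n + 1)%Z) + c2 n * Derive g1 (q (n + 1)%Z) < 0).
  { intros n. destruct (Ho n) as (_ & Hq & _). pose proof (F0 n).
    pose proof (SC _ _ (not_congr_back _ _ Hq)) as S. unfold c1, c2.
    replace (- ((g1 (q (n + 1)%Z) - g1 (q n)) / D n) * Derive g2 (q (n + 1)%Z) + (g2 (q (n + 1)%Z) - g2 (q n)) / D n * Derive g1 (q (n + 1)%Z))
      with (- (((g1 (q n) - g1 (q (n + 1)%Z)) * - Derive g2 (q (n + 1)%Z) + (g2 (q n) - g2 (q (n + 1)%Z)) * Derive g1 (q (n + 1)%Z)) / D n))
      by (field; lra).
    assert (0 < ((g1 (q n) - g1 (q (n + 1)%Z)) * - Derive g2 (q (n + 1)%Z) + (g2 (q n) - g2 (q (n + 1)%Z)) * Derive g1 (q (n + 1)%Z)) / D n)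
      by (apply Rdiv_lt_0_compat; lra). lra. }
  assert (Dec : forall n, let e1 := Derive g1 (q (n + 1)%Z) in let e2 := Derive g2 (q (n + 1)%Z) in
     let yy := y (n + 1)%Z in let ss := sqrt (1 - yy²) in
     c1 n = yy * e1 + ss * e2 /\ c2 n = yy * e2 - ss * e1 /\
     c1 (n + 1)%Z = yy * e1 - ss * e2 /\ c2 (n + 1)%Z = yy * e2 + ss * e1 /\ yy * yy + ss * ss = 1).
  { intros n e1 e2 yy ss. pose proof (unit_d (q (n + 1)%Z)) as U. fold e1 e2 in U.
    destruct (frame e1 e2 (c1 n) (c2 n) U (Fu n)) as (A1 & A2 & A3).
    destruct (frame e1 e2 (c1 (n + 1)%Z) (c2 (n + 1)%Z) U (Fu (n + 1)%Z)) as (B1 & B2 & B3).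
    pose proof (Fy' n) as Y1. pose proof (Fy (n + 1)%Z) as Y2. fold e1 e2 yy in Y1, Y2.
    rewrite <- Y1 in A1, A2, A3. rewrite <- Y2 in B1, B2, B3.
    pose proof (sqrt_w_neg _ _ A3 (Fwb n)) as W1. pose proof (sqrt_w_pos _ _ B3 (Fwa (n + 1)%Z)) as W2.
    fold e1 e2 yy ss in W1, W2. rewrite W1 in A1, A2. rewrite W2 in B1, B2.
    split; [|split; [|split; [|split]]]; try lra.
    rewrite W2 in B3. nra. }
  destruct (angle_exists (c2 n0) (- c1 n0)) as [th0 [Th1 Th2]].
  { pose proof (Fu n0). nra. }
  destruct (add_rec (fun n => 2 * acos (y n)) n0 th0) as [phi [Hphi0 Hphi]].
  assert (Ybd : forall n, -1 < y n < 1) by (intros n; apply (Ho n)).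
  assert (Inv : forall n, cos (phi n) = c2 n /\ sin (phi n) = - c1 n).
  { apply (Zind2 _ n0).
    - rewrite Hphi0. auto.
    - intros n [I1 I2]. rewrite Hphi. destruct (Dec n) as (A1 & A2 & B1 & B2 & K).
      set (yy := y (n + 1)%Z) in *. set (ss := sqrt (1 - yy²)) in *.
      assert (Ca : cos (acos yy) = yy) by (apply cos_acos; pose proof (Ybd (n + 1)%Z); unfold yy; lra).
      assert (Sa : sin (acos yy) = ss) by (apply sin_acos; pose proof (Ybd (n + 1)%Z); unfold yy; lra).
      replace (phi n + 2 * acos yy) with (phi n + acos yy + acos yy) by ring.
      repeat (rewrite cos_plus || rewrite sin_plus). rewrite Ca, Sa, I1, I2, A1, A2, B1, B2.
      set (e1 := Derive g1 (q (n + 1)%Z)). set (e2 := Derive g2 (q (n + 1)%Z)).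
      split.
      + transitivity ((yy * e2 + ss * e1) * (yy * yy + ss * ss)). ring. rewrite K; ring.
      + transitivity (- (yy * e1 - ss * e2) * (yy * yy + ss * ss)). ring. rewrite K; ring.
    - intros n [I1 I2]. rewrite Hphi in I1, I2. destruct (Dec n) as (A1 & A2 & B1 & B2 & K).
      set (yy := y (n + 1)%Z) in *. set (ss := sqrt (1 - yy²)) in *.
      assert (Ca : cos (acos yy) = yy) by (apply cos_acos; pose proof (Ybd (n + 1)%Z); unfold yy; lra).
      assert (Sa : sin (acos yy) = ss) by (apply sin_acos; pose proof (Ybd (n + 1)%Z); unfold yy; lra).
      replace (phi n) with (phi n + 2 * acos yy - acos yy - acos yy) by ring.
      repeat (rewrite cos_minus || rewrite sin_minus). rewrite Ca, Sa, I1, I2, A1, A2, B1, B2.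
      set (e1 := Derive g1 (q (n + 1)%Z)). set (e2 := Derive g2 (q (n + 1)%Z)).
      split.
      + transitivity ((yy * e2 - ss * e1) * (yy * yy + ss * ss)). ring. rewrite K; ring.
      + transitivity (- (yy * e1 + ss * e2) * (yy * yy + ss * ss)). ring. rewrite K; ring. }
  exists phi. split.
  - intros n. destruct (Ho n) as (_ & Hq & _). split; [auto|split; [|split]].
    + rewrite Hphi. pose proof (acos_bound_lt (y (n + 1)%Z) (Ybd (n + 1)%Z)). lra.
    + replace ((phi n + phi (n + 1)%Z) / 2) with (phi n + acos (y (n + 1)%Z)) by (rewrite Hphi; field).
      destruct (Inv n) as [I1 I2]. destruct (Dec n) as (A1 & A2 & B1 & B2 & K).
      set (yy := y (n + 1)%Z) in *. set (ss := sqrt (1 - yy²)) in *.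
      assert (Ca : cos (acos yy) = yy) by (apply cos_acos; pose proof (Ybd (n + 1)%Z); unfold yy; lra).
      assert (Sa : sin (acos yy) = ss) by (apply sin_acos; pose proof (Ybd (n + 1)%Z); unfold yy; lra).
      apply max_of_normal.
      * rewrite sin_plus, Ca, Sa, I1, I2, A1, A2.
        transitivity (Derive g1 (q (n + 1)%Z) * (yy * yy + ss * ss)). rewrite K; ring. ring.
      * rewrite cos_plus, Ca, Sa, I1, I2, A1, A2.
        transitivity (Derive g2 (q (n + 1)%Z) * (yy * yy + ss * ss)). rewrite K; ring. ring.
    + destruct (Inv n) as [I1 I2]. pose proof (F0 n). split.
      * rewrite I2. fold (D n). unfold c1. field. lra.
      * rewrite I1. fold (D n). unfold c2. field. lra.
  - intros n. unfold yP. destruct (Inv n) as [I1 I2]. rewrite I1, I2, Fy. ring.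
Qed.

Lemma dirB phi p (n0 : Z) : gen_orbit (Sgen g1 g2) (2 * PI) (inA_S g1 g2) phi p ->
  exists q, Pair g1 g2 P q phi /\ forall n, p n = pP g1 g2 q phi n.
Proof.
  intros Ho. pose proof HP as HP'.
  destruct (choice_Z (fun n t => ismax g1 g2 t ((phi n + phi (n + 1)%Z) / 2))) as [sg Hsg].
  { intros n. apply attain. }
  assert (Hp1 : forall n, p n = pr g1 g2 (sg n) (phi n)).
  { intros n. destruct (Ho n) as (_ & _ & Hd1 & _).
    pose proof (is_derive_unique _ _ _ Hd1) as E1. rewrite (is_derive_unique _ _ _ (S_d1 _ _ _ (Hsg n))) in E1. lra. }
  assert (Hp2 : forall n, p (n + 1)%Z = pr g1 g2 (sg n) (phi (n + 1)%Z)).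
  { intros n. destruct (Ho n) as (_ & _ & _ & Hd2).
    pose proof (is_derive_unique _ _ _ Hd2) as E1. rewrite (is_derive_unique _ _ _ (S_d2 _ _ _ (Hsg n))) in E1. lra. }
  assert (Hord : forall n, phi n < phi (n + 1)%Z < phi n + 2 * PI) by (intros n; apply (Ho n)).
  assert (NC : forall n (k : Z), sg (n - 1)%Z <> sg n + IZR k * P).
  { intros n k E. 
    destruct (normal_at_max _ _ (Hsg n)) as [N1 N2].
    destruct (normal_at_max _ _ (Hsg (n - 1)%Z)) as [M1 M2].
    destruct (perZD k (sg n)) as [P1 P2]. rewrite <- E in P1, P2.
    replace (n - 1 + 1)%Z with n in M1, M2 by lia.
    set (a := (phi (n - 1)%Z + phi n) / 2) in *.
    set (b := (phi n + phi (n + 1)%Z) / 2) in *.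
    pose proof (Hord (n - 1)%Z) as O1. pose proof (Hord n) as O2.
    replace (n - 1 + 1)%Z with n in O1 by lia.
    apply (rot_neq a (b - a)). unfold a, b; lra.
    replace (a + (b - a)) with b by ring. lra.
    replace (a + (b - a)) with b by ring. lra. }
  assert (CH : forall n, chord g1 g2 (sg (n - 1)%Z) (sg n) (phi n) /\ 0 < Lgen g1 g2 (sg (n - 1)%Z) (sg n)).
  { intros n.
    assert (Epr : pr g1 g2 (sg (n - 1)%Z) (phi n) = pr g1 g2 (sg n) (phi n)).
    { rewrite <- Hp1. pose proof (Hp2 (n - 1)%Z) as E. replace (n - 1 + 1)%Z with n in E by lia. auto. }
    assert (Hlt : pr g1 g2 (sg (n - 1)%Z) ((phi n + phi (n + 1)%Z) / 2) < pr g1 g2 (sg n) ((phi n + phi (n + 1)%Z) / 2)).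
    { apply max_strict. apply Hsg. apply NC. }
    set (de := (phi (n + 1)%Z - phi n) / 2).
    replace ((phi n + phi (n + 1)%Z) / 2) with (phi n + de) in Hlt by (unfold de; field).
    rewrite !pr_plus, Epr in Hlt.
    assert (Hsd : 0 < sin de) by (apply sin_gt_0; pose proof (Hord n); unfold de; lra).
    set (lam := prd g1 g2 (sg n) (phi n) - prd g1 g2 (sg (n - 1)%Z) (phi n)).
    assert (Hlam : 0 < lam) by (unfold lam; nra).
    pose proof (sin2_cos2 (phi n)) as U. unfold Rsqr in U.
    assert (E1 : g1 (sg n) - g1 (sg (n - 1)%Z) = lam * - sin (phi n)).
    { unfold lam, prd. unfold pr in Epr.
      transitivity ((g1 (sg n) - g1 (sg (n - 1)%Z)) * (sin (phi n) * sin (phi n) + cos (phi n) * cos (phi n))).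
      rewrite U; ring. 
      transitivity ((g1 (sg n) - g1 (sg (n - 1)%Z)) * (sin (phi n) * sin (phi n)) +
          cos (phi n) * ((g1 (sg n) * cos (phi n) + g2 (sg n) * sin (phi n)) - (g1 (sg (n - 1)%Z) * cos (phi n) + g2 (sg (n - 1)%Z) * sin (phi n)))
          - (g2 (sg n) - g2 (sg (n - 1)%Z)) * sin (phi n) * cos (phi n)).
      ring. rewrite Epr. ring. }
    assert (E2 : g2 (sg n) - g2 (sg (n - 1)%Z) = lam * cos (phi n)).
    { unfold lam, prd. unfold pr in Epr.
      transitivity ((g2 (sg n) - g2 (sg (n - 1)%Z)) * (sin (phi n) * sin (phi n) + cos (phi n) * cos (phi n))).
      rewrite U; ring.
      transitivity ((g2 (sg n) - g2 (sg (n - 1)%Z)) * (cos (phi n) * cos (phi n)) +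
          sin (phi n) * ((g1 (sg n) * cos (phi n) + g2 (sg n) * sin (phi n)) - (g1 (sg (n - 1)%Z) * cos (phi n) + g2 (sg (n - 1)%Z) * sin (phi n)))
          - (g1 (sg n) - g1 (sg (n - 1)%Z)) * sin (phi n) * cos (phi n)).
      ring. rewrite Epr. ring. }
    assert (EL : Lgen g1 g2 (sg (n - 1)%Z) (sg n) = lam).
    { unfold Lgen. rewrite E1, E2. apply sqrt_lem_1. nra. lra.
      transitivity (lam * lam * (sin (phi n) * sin (phi n) + cos (phi n) * cos (phi n))).
      rewrite U; ring. ring. }
    split. unfold chord. rewrite EL. split; auto. lra. }
  destruct (choice_Z (fun n r => 0 < r < P /\ exists k : Z, r = sg n - sg (n - 1)%Z + IZR k * P)) as [Rf HRf].
  { intros n. destruct (reduce_mod P 0 (sg n - sg (n - 1)%Z) HP') as [k Hk].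
    exists (sg n - sg (n - 1)%Z + IZR k * P). split; [|eauto]. split; [|lra].
    destruct Hk as [Hk _]. destruct Hk as [Hk|Hk]; auto. exfalso.
    apply (NC n k). lra. }
  destruct (add_rec (fun m => Rf (m - 1)%Z) n0 (sg (n0 - 1)%Z)) as [q [Hq0 Hq]].
  assert (Hq' : forall n, q (n + 1)%Z = q n + Rf n).
  { intros n. rewrite Hq. replace (n + 1 - 1)%Z with n by lia. auto. }
  assert (Inv : forall n, exists k : Z, q n = sg (n - 1)%Z + IZR k * P).
  { apply (Zind2 _ n0).
    - exists 0%Z. rewrite Hq0. simpl. ring.
    - intros n [k Hk]. destruct (proj2 (HRf n)) as [k' Hk']. exists (k + k')%Z.
      rewrite Hq', Hk, Hk', plus_IZR. replace (n + 1 - 1)%Z with n by lia. ring.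
    - intros n [k Hk]. destruct (proj2 (HRf n)) as [k' Hk']. exists (k - k')%Z.
      rewrite Hq' in Hk. replace (n + 1 - 1)%Z with n in Hk by lia. rewrite minus_IZR.
      assert (q n = sg n + IZR k * P - Rf n) by lra. rewrite H, Hk'. ring. }
  exists q. split.
  - intros n. split; [|split; [|split]].
    + rewrite Hq'. pose proof (proj1 (HRf n)). lra.
    + auto.
    + destruct (Inv (n + 1)%Z) as [k Hk]. replace (n + 1 - 1)%Z with n in Hk by lia.
      rewrite Hk. apply ismax_per, Hsg.
    + destruct (Inv n) as [k Hk]. destruct (Inv (n + 1)%Z) as [k' Hk']. replace (n + 1 - 1)%Z with n in Hk' by lia.
      destruct (CH n) as [[C1 C2] _].
      unfold chord, Lgen in *. rewrite Hk, Hk'.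
      destruct (perZ k (sg (n - 1)%Z)) as [A1 A2]. destruct (perZ k' (sg n)) as [B1 B2].
      rewrite A1, A2, B1, B2. auto.
  - intros n. unfold pP. destruct (Inv n) as [k Hk]. rewrite Hk, pr_per.
    rewrite Hp1. pose proof (Hp2 (n - 1)%Z) as E. replace (n - 1 + 1)%Z with n in E by lia.
    rewrite <- E, <- Hp1. reflexivity.
Qed.

End Curve.

Theorem theorem2p3 (g1 g2 : R -> R) (P : R) :
  strictly_convex_C2_closed_curve g1 g2 P ->
  origin_interior g1 g2 ->
  forall l : oline, M_L g1 g2 P l <-> M_S g1 g2 l.
Proof.
  intros HC _ l. split.
  - intros (q & y & Ho & Hm & n & ->).
    destruct (dirA g1 g2 P HC q y n Ho) as [phi [HP2 Hy]].
    exists phi, (pP g1 g2 q phi). split; [|split].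
    + apply (Pair_S g1 g2 P HC q phi HP2).
    + apply (TA g1 g2 P HC q phi HP2 Hm).
    + exists n. rewrite Hy. apply (Pair_line g1 g2 P HC q phi n HP2).
  - intros (phi & p & Ho & Hm & n & ->).
    destruct (dirB g1 g2 P HC phi p n Ho) as [q [HP2 Hp]].
    exists q, (yP g1 g2 q phi). split; [|split].
    + apply (Pair_L g1 g2 P HC q phi HP2).
    + apply (TB g1 g2 P HC q phi HP2 Hm).
    + exists n. rewrite Hp. symmetry. apply (Pair_line g1 g2 P HC q phi n HP2).
Qed.
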